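(* Let $\lambda\in\Lambda$ with associated $T_\lambda$. Let $T_2\ge e^{900}(1+T_\lambda)$ be such that $t^{2/3}\lambda(t)<\frac{t}{100}$ for all $t\ge T_2$, and let $T_0\ge T_2$. Define, for $t\ge T_0$ and $r>0$, $$w_1(t,r)=\frac{-2}{r}\big(\lambda(t+r)-\lambda(t)-r\lambda'(t+r)\big)+\frac{2}{r}\int_{t+r}^{\infty}\lambda''(s)\Big((s-t)-\sqrt{(s-t)^2-r^2}\Big)ds.$$ Then there is $C>0$, independent of $T_0$, such that for all $0\le k\le 8$, $0\le j\le 3$, $t\ge T_0$, $r>0$: $$|\partial_t^k\partial_r^j w_1(t,r)|\le\begin{cases}\dfrac{C r^{1-j}\lambda(t)(\log(t)+|\log(r)|)}{t^{2+k}}, & r\le t,\\[2mm] \dfrac{C}{r^{1+j}t^k}\sup_{x\in[t,t+r]}\lambda(x), & r\ge t.\end{cases}$$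
   Context: $\Lambda$ is the set of positive $\lambda\in C^\infty((50,\infty))$ for which there exist $T_\lambda>100$, constants $C_l,C_u,C_2\ge0$ and $C_k\ge0$ ($k\ge3$) such that for all $t\ge T_\lambda$: $-\frac{C_l}{t}\le\frac{\lambda'(t)}{\lambda(t)}\le\frac{C_u}{t}$ and $\frac{|\lambda^{(k)}(t)|}{\lambda(t)}\le\frac{C_k}{t^k}$ for $k\ge2$; and, with $M=\max\{C_l,C_u\}$: (i) $0\le C_u<\frac1{30}-\frac{C_l}{5}$; (ii) $\sqrt{C_\rho}\cdot\frac{179}{267}\Big(M(1+2\|\mathcal K\|_{\mathcal L(L^2_\rho)})+M^2\big(\frac14+2\|[\xi\partial_\xi,\mathcal K]\|_{\mathcal L(L^2_\rho)}+\|\mathcal K\|^2_{\mathcal L(L^2_\rho)}\big)+C_2\big(\frac12+\|\mathcal K\|_{\mathcal L(L^2_\rho)}\big)+4\big(M^2+\frac{C_2}{3}(3+2\pi^2)\big)\Big)<\frac13$; (iii) $M<\frac{1}{3\sqrt{C_\rho}}\cdot\frac{1513}{1044}\cdot\frac{1}{1+2\|\mathcal K\|_{\mathcal L(L^{2,1/2}_\rho)}}$. Here $\mathcal K$ is the Krieger–Schlag–Tataru transference operator (defined by $\mathcal{F}(R\partial_Ru)=-2\xi\partial_\xi\mathcal F u+\mathcal K\mathcal F u$) for the distorted Fourier transform $\mathcal F$ associated with $-\partial_R^2+\frac{3}{4R^2}-\frac{8}{(1+R^2)^2}$ on $L^2((0,\infty),dR)$, whose spectral density is $\rho$; $L^{2,\alpha}_\rho$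 has norm $\|f\langle\xi\rangle^\alpha\sqrt\rho\|_{L^2(d\xi)}$, $L^2_\rho=L^{2,0}_\rho$; and $C_\rho>0$ is a fixed constant with $\rho(y)/\rho(z)\le C_\rho(y/z+z/y)$ for all $y,z>0$. *)

(* Defs.v *)
From Stdlib Require Import Reals Lra.
From Coquelicot Require Import Coquelicot.
Open Scope R_scope.

(* The class Lambda.  The operator norms ||K||_{L(L^2_rho)} (nK),
   ||K||_{L(L^{2,1/2}_rho)} (nKh), ||[xi d_xi, K]||_{L(L^2_rho)} (nC) and the
   constant C_rho (Crho) are passed as real parameters. *)
Definition in_Lambda (nK nKh nC Crho : R) (lam : R -> R) (Tl : R) : Prop :=
  (forall x, 50 < x -> 0 < lam x) /\
  (forall (k : nat) x, 50 < x -> ex_derive_n lam k x) /\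
  100 < Tl /\
  exists (Cl Cu C2 : R) (Ck : nat -> R),
    0 <= Cl /\ 0 <= Cu /\ 0 <= C2 /\ (forall k, (3 <= k)%nat -> 0 <= Ck k) /\
    (forall t, Tl <= t ->
        - Cl / t <= Derive lam t / lam t /\ Derive lam t / lam t <= Cu / t) /\
    (forall t, Tl <= t -> Rabs (Derive_n lam 2 t) / lam t <= C2 / t ^ 2) /\
    (forall (k : nat) t, (3 <= k)%nat -> Tl <= t ->
        Rabs (Derive_n lam k t) / lam t <= Ck k / t ^ k) /\
    (let M := Rmax Cl Cu in
     Cu < 1/30 - Cl/5 /\
     sqrt Crho * (179/267) *
       (M * (1 + 2 * nK)
        + M ^ 2 * (1/4 + 2 * nC + nK ^ 2)
        + C2 * (1/2 + nK)
        + 4 * (M ^ 2 + C2 / 3 * (3 + 2 * PI ^ 2))) < 1/3 /\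
     M < 1 / (3 * sqrt Crho) * (1513/1044) * (1 / (1 + 2 * nKh))).

Definition w1 (lam : R -> R) (t r : R) : R :=
  (-2) / r * (lam (t + r) - lam t - r * Derive lam (t + r))
  + 2 / r * RInt_gen
      (fun s => Derive_n lam 2 s * ((s - t) - sqrt ((s - t) ^ 2 - r ^ 2)))
      (at_point (t + r)) (Rbar_locally p_infty).

Definition dw1 (lam : R -> R) (k j : nat) (t r : R) : R :=
  Derive_n (fun t' => Derive_n (fun r' => w1 lam t' r') j r) k t.

Definition sup_on (lam : R -> R) (a b : R) : R :=
  real (Lub_Rbar (fun y => exists x, a <= x <= b /\ y = lam x)).

(* Main.v *)
Require Import Defs.
From Stdlib Require Import Reals Lra Lia.
From Coquelicot Require Import Coquelicot.
Open Scope R_scope.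

Lemma D_val (f : R -> R) x l l' : is_derive f x l -> l = l' -> is_derive f x l'.
Proof. intros H ->; auto. Qed.
Lemma D_plus (f g : R -> R) x a b : is_derive f x a -> is_derive g x b -> is_derive (fun y => f y + g y) x (a + b).
Proof. intros. apply (is_derive_plus f g x a b); auto. Qed.
Lemma D_minus (f g : R -> R) x a b : is_derive f x a -> is_derive g x b -> is_derive (fun y => f y - g y) x (a - b).
Proof. intros. apply (is_derive_minus f g x a b); auto. Qed.
Lemma D_mult (f g : R -> R) x a b : is_derive f x a -> is_derive g x b -> is_derive (fun y => f y * g y) x (a * g x + f x * b).
Proof. intros. apply (D_val _ _ _ _ (is_derive_mult f g x a b H H0 (fun n m => Rmult_comm n m))). simpl. unfold plus, mult; simpl. ring. Qed.
Lemma D_scal (f : R -> R) k x a : is_derive f x a -> is_derive (fun y => k * f y) x (k * a).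
Proof. intros. apply is_derive_scal; auto. Qed.
Lemma D_const (k : R) x : is_derive (fun _ => k) x 0.
Proof. apply (is_derive_const k x). Qed.
Lemma D_id x : is_derive (fun y : R => y) x 1.
Proof. apply (is_derive_id x). Qed.
Lemma D_comp (f g : R -> R) x a b : is_derive g x a -> is_derive f (g x) b -> is_derive (fun y => f (g y)) x (b * a).
Proof. intros. apply (D_val _ _ _ _ (is_derive_comp f g x b a H0 H)). unfold scal; simpl; unfold mult; simpl. ring. Qed.
Lemma D_inv (f : R -> R) x a : is_derive f x a -> f x <> 0 -> is_derive (fun y => / f y) x (- a / (f x)^2).
Proof. intros. apply (D_val _ _ _ _ (is_derive_inv f x a H H0)). unfold Rdiv, scal; simpl; unfold mult; simpl. field. auto. Qed.
Lemma D_ext (f g : R -> R) x l : (forall y, f y = g y) -> is_derive f x l -> is_derive g x l.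
Proof. intros. apply (is_derive_ext f g x l H H0). Qed.

Lemma C_plus (f g : R -> R) x : continuous f x -> continuous g x -> continuous (fun y => f y + g y) x.
Proof. intros. apply (@continuous_plus R_UniformSpace R_AbsRing R_NormedModule f g x); auto. Qed.
Lemma C_minus (f g : R -> R) x : continuous f x -> continuous g x -> continuous (fun y => f y - g y) x.
Proof. intros. apply (@continuous_minus R_UniformSpace R_AbsRing R_NormedModule f g x); auto. Qed.
Lemma C_mult (f g : R -> R) x : continuous f x -> continuous g x -> continuous (fun y => f y * g y) x.
Proof. intros. apply (@continuous_mult R_UniformSpace R_AbsRing f g x); auto. Qed.
Lemma C_const (k : R) x : continuous (fun _ : R => k) x.
Proof. apply continuous_const. Qed.
Lemma C_id x : continuous (fun y : R => y) x.
Proof. apply continuous_id. Qed.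
Lemma C_comp (f g : R -> R) x : continuous g x -> continuous f (g x) -> continuous (fun y => f (g y)) x.
Proof. intros. apply (@continuous_comp R_UniformSpace R_UniformSpace R_UniformSpace g f x); auto. Qed.
Lemma C_D (f : R -> R) x l : is_derive f x l -> continuous f x.
Proof. intros. apply (@ex_derive_continuous R_AbsRing R_NormedModule). exists l; auto. Qed.

Lemma D_mulc (f : R -> R) c x a : is_derive f x a -> is_derive (fun y => f y * c) x (a * c).
Proof. intros. apply (D_ext (fun y => c * f y)). intros; ring. replace (a * c) with (c * a) by ring. apply D_scal; auto. Qed.
Lemma D_lin (c k x : R) : is_derive (fun y => c + k * y) x k.
Proof. auto_derive; auto; ring. Qed.
Lemma D_shift (c x : R) : is_derive (fun y => y + c) x 1.
Proof. auto_derive; auto; ring. Qed.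

Ltac rring := (match goal with |- @eq _ ?a ?b => change (@eq R a b) end); ring.
Ltac rfield := (match goal with |- @eq _ ?a ?b => change (@eq R a b) end); field.


Definition DL (a b v : R) := / ((a + b * v) * v).
Definition GL (a b v : R) := / a * (ln v - ln (a + b * v)).

Lemma GL_deriv a b v : 0 < a -> 0 < b -> 0 < v -> is_derive (GL a b) v (DL a b v).
Proof.
  intros Ha Hb Hv. unfold GL, DL.
  assert (0 < a + b * v) by nra.
  auto_derive.
  - split; [lra|split;[lra|auto]].
  - field. lra.
Qed.

Lemma DL_pos a b v : 0 < a -> 0 < b -> 0 < v -> 0 < DL a b v.
Proof. intros. unfold DL. apply Rinv_0_lt_compat. nra. Qed.

Lemma DL_cont a b v : 0 < a -> 0 < b -> 0 < v -> continuous (DL a b) v.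
Proof.
  intros Ha Hb Hv. apply (@ex_derive_continuous R_AbsRing R_NormedModule). unfold DL.
  assert (0 < a + b * v) by nra.
  auto_derive. nra.
Qed.

Lemma GL_alt a b v : 0 < a -> 0 < b -> 0 < v -> GL a b v = - / a * ln (a / v + b).
Proof.
  intros. unfold GL.
  replace (a / v + b) with ((a + b * v) / v) by (field; lra).
  rewrite ln_div; [ring|nra|nra].
Qed.

Lemma ln_1p_le x : 0 <= x -> ln (1 + x) <= x.
Proof.
  intros. rewrite <- (ln_exp x) at 2. apply ln_le. lra. apply exp_ineq1_le.
Qed.

Lemma GL_diff a b u w : 0 < a -> 0 < b -> 1 <= u <= w -> 0 <= GL a b w - GL a b u <= / (b * u).
Proof.
  intros Ha Hb Hu. rewrite !GL_alt; try lra.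
  assert (0 < a / w) by (apply Rdiv_lt_0_compat; lra).
  assert (a / w <= a / u). { apply Rmult_le_compat_l; [lra|]. apply Rinv_le_contravar; lra. }
  assert (ln (a / w + b) <= ln (a / u + b)) by (apply ln_le; lra).
  assert (ln b <= ln (a / w + b)) by (apply ln_le; lra).
  assert (Hl : ln (a / u + b) - ln b <= a / (u * b)).
  { replace (a / u + b) with (b * (1 + a / (u * b))) by (field; lra).
    rewrite ln_mult; try lra.
    - assert (ln (1 + a / (u * b)) <= a / (u * b)). apply ln_1p_le.
      apply Rlt_le, Rdiv_lt_0_compat; nra. lra.
    - assert (0 < a / (u*b)) by (apply Rdiv_lt_0_compat; nra). lra. }
  assert (0 < / a) by (apply Rinv_0_lt_compat; lra).
  split.
  - nra.
  - assert (Hq: - / a * ln (a / w + b) - - / a * ln (a / u + b) <= /a * (a / (u * b))) by nra.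
    replace (/ a * (a / (u * b))) with (/ (b * u)) in Hq by (field; lra). lra.
Qed.

Lemma GL_bound a b w : 0 < a -> 0 < b -> 1 <= w -> GL a b w - GL a b 1 <= / a * ln ((a + b) / b).
Proof.
  intros Ha Hb Hw. rewrite !GL_alt; try lra.
  assert (0 < a / w) by (apply Rdiv_lt_0_compat; lra).
  assert (ln b <= ln (a / w + b)) by (apply ln_le; lra).
  replace ((a + b) / b) with ((a/1+b)/b) by (field; lra).
  assert (0 < a/1) by (apply Rdiv_lt_0_compat; lra).
  rewrite ln_div; try lra.
  assert (0 < / a) by (apply Rinv_0_lt_compat; lra).
  nra.
Qed.


Lemma ball_R (x y e : R) : ball x e y <-> Rabs (y - x) < e.
Proof. reflexivity. Qed.

Lemma lim_abs_le (F : R -> R) l c :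
  filterlim F (Rbar_locally p_infty) (locally l) ->
  (forall w, 1 <= w -> Rabs (F w) <= c) -> Rabs l <= c.
Proof.
  intros HF Hb. destruct (Rle_or_lt (Rabs l) c) as [|Hlt]; auto.
  exfalso.
  assert (He: 0 < Rabs l - c) by lra.
  assert (Hloc: locally l (fun y => Rabs (y - l) < Rabs l - c)).
  { exists (mkposreal _ He). intros y Hy. apply ball_R in Hy. exact Hy. }
  destruct (HF _ Hloc) as [M HM].
  set (w := Rmax 1 M + 1).
  assert (Hw1 : 1 <= w) by (unfold w; pose proof (Rmax_l 1 M); lra).
  assert (HwM : M < w) by (unfold w; pose proof (Rmax_r 1 M); lra).
  specialize (HM w HwM). simpl in HM. specialize (Hb w Hw1).
  pose proof (Rabs_triang_inv l (l - F w)).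
  replace (l - (l - F w)) with (F w) in H by ring.
  rewrite Rabs_minus_sym in HM. lra.
Qed.

Lemma KDL_cont K a b v : 0 < a -> 0 < b -> 0 < v -> continuous (fun v => K * DL a b v) v.
Proof.
  intros Ha Hb Hv. apply (@ex_derive_continuous R_AbsRing R_NormedModule). unfold DL.
  assert (0 < a + b * v) by nra.
  auto_derive. nra.
Qed.

Lemma EXI (h : R -> R) a b K : 0 < a -> 0 < b ->
  (forall v, 1 <= v -> continuous h v) ->
  (forall v, 1 <= v -> Rabs (h v) <= K * DL a b v) ->
  is_RInt_gen h (at_point 1) (Rbar_locally p_infty) (RInt_gen h (at_point 1) (Rbar_locally p_infty)) /\
  Rabs (RInt_gen h (at_point 1) (Rbar_locally p_infty)) <= K * (/ a * ln ((a + b) / b)).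
Proof.
  intros Ha Hb Hc Hh.
  assert (HK: 0 <= K).
  { specialize (Hh 1 (Rle_refl 1)). pose proof (DL_pos a b 1 Ha Hb Rlt_0_1).
    pose proof (Rabs_pos (h 1)). nra. }
  assert (Hex: forall u w, 1 <= u -> u <= w -> ex_RInt h u w).
  { intros u w Hu Hw. apply (@ex_RInt_continuous R_CompleteNormedModule). intros z Hz. apply Hc.
    rewrite Rmin_left in Hz; lra. }
  assert (Hseg: forall u w, 1 <= u -> u <= w -> Rabs (RInt h u w) <= K * (GL a b w - GL a b u)).
  { intros u w Hu Huw.
    eapply Rle_trans. apply abs_RInt_le; auto.
    assert (HI: is_RInt (fun v => K * DL a b v) u w (K * (GL a b w - GL a b u))).
    { replace (K * (GL a b w - GL a b u)) with (minus ((fun v => K * GL a b v) w) ((fun v => K * GL a b v) u))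
        by (unfold minus, plus, opp; simpl; ring).
      apply (is_RInt_derive (fun v => K * GL a b v)).
      - intros x Hx. rewrite Rmin_left, Rmax_right in Hx by lra.
        apply is_derive_scal. apply GL_deriv; lra.
      - intros x Hx. rewrite Rmin_left, Rmax_right in Hx by lra.
        apply KDL_cont; lra. }
    rewrite <- (is_RInt_unique _ _ _ _ HI).
    apply RInt_le; auto.
    - apply (@ex_RInt_continuous R_CompleteNormedModule). intros z Hz. rewrite Rmin_left, Rmax_right in Hz by lra.
      apply (continuous_comp h Rabs). apply Hc; lra. apply continuous_Rabs.
    - eexists; exact HI.
    - intros x Hx. apply Hh. lra. }
  set (F := fun w => RInt h 1 w).
  assert (HF: exists l, filterlim F (Rbar_locally p_infty) (locally l)).
  { apply (proj1 (@filterlim_locally_cauchy R R_CompleteSpace (Rbar_locally p_infty) _ F)).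
    intros eps.
    set (M := Rmax 1 ((K + 1) / (b * eps))).
    exists (fun w => M < w). split. exists M. auto.
    assert (Hgen: forall u w, M < u -> u <= w -> Rabs (F w - F u) < eps).
    { intros u w Hu Huw.
      assert (H1u : 1 <= u) by (pose proof (Rmax_l 1 ((K + 1) / (b * eps))); unfold M in Hu; lra).
      assert (Hu2 : (K + 1) / (b * eps) < u) by (pose proof (Rmax_r 1 ((K + 1) / (b * eps))); unfold M in Hu; lra).
      unfold F. rewrite <- (RInt_Chasles h 1 u w) by (apply Hex; lra).
      set (A := RInt h 1 u). set (B := RInt h u w).
      change (Rabs (A + B - A) < eps).
      unfold Rminus; rewrite (Rplus_comm A B), Rplus_assoc, Rplus_opp_r, Rplus_0_r.
      eapply Rle_lt_trans. apply Hseg; lra.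
      pose proof (GL_diff a b u w Ha Hb (conj H1u Huw)).
      assert (K * (GL a b w - GL a b u) <= K * / (b * u)) by (apply Rmult_le_compat_l; lra).
      eapply Rle_lt_trans. exact H0.
      pose proof (cond_pos eps).
      assert (0 < b * u) by nra.
      assert (Hx: (K + 1) < u * (b * eps)).
      { apply (Rmult_lt_compat_r (b * eps)) in Hu2; [|nra].
        unfold Rdiv in Hu2. rewrite Rmult_assoc, Rinv_l in Hu2 by nra. lra. }
      apply (Rmult_lt_reg_r (b * u)); auto.
      rewrite Rmult_assoc, Rinv_l by lra. nra. }
    intros u w Hu Hw. apply ball_R.
    destruct (Rle_or_lt u w).
    - apply Hgen; auto.
    - rewrite Rabs_minus_sym. apply Hgen; lra. }
  destruct HF as [l Hl].
  assert (Hgen: is_RInt_gen h (at_point 1) (Rbar_locally p_infty) l).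
  { intros P HP. destruct (Hl P HP) as [M HM].
    apply Filter_prod with (Q := fun x => x = 1) (R := fun w => Rmax 1 M < w).
    - reflexivity.
    - exists (Rmax 1 M). auto.
    - intros x y -> Hy. exists (F y). split.
      + simpl. apply (@RInt_correct R_CompleteNormedModule). apply Hex. lra. pose proof (Rmax_l 1 M); lra.
      + apply HM. pose proof (Rmax_r 1 M); lra. }
  rewrite (is_RInt_gen_unique _ _ Hgen). split; auto.
  apply (lim_abs_le F l); auto.
  intros w Hw. unfold F. eapply Rle_trans. apply Hseg; lra.
  apply Rmult_le_compat_l; auto. apply GL_bound; lra.
Qed.


Definition Ig (f : R -> R) := RInt_gen f (at_point 1) (Rbar_locally p_infty).

Lemma G_minus (f g : R -> R) lf lg :
  is_RInt_gen f (at_point 1) (Rbar_locally p_infty) lf ->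
  is_RInt_gen g (at_point 1) (Rbar_locally p_infty) lg ->
  is_RInt_gen (fun y => f y - g y) (at_point 1) (Rbar_locally p_infty) (lf - lg).
Proof. intros. apply (@is_RInt_gen_minus R_NormedModule (at_point 1) (Rbar_locally p_infty) _ _ f g lf lg); auto. Qed.
Lemma G_scal (f : R -> R) k lf :
  is_RInt_gen f (at_point 1) (Rbar_locally p_infty) lf ->
  is_RInt_gen (fun y => k * f y) (at_point 1) (Rbar_locally p_infty) (k * lf).
Proof. intros. apply (@is_RInt_gen_scal R_NormedModule (at_point 1) (Rbar_locally p_infty) _ _ f k lf); auto. Qed.

Lemma lnab_nonneg a b : 0 < a -> 0 < b -> 0 <= / a * ln ((a + b) / b).
Proof.
  intros. apply Rmult_le_pos. left; apply Rinv_0_lt_compat; lra.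
  rewrite <- ln_1. apply ln_le. lra.
  apply (Rmult_le_reg_r b); auto. unfold Rdiv. rewrite Rmult_assoc, Rinv_l; lra.
Qed.

Lemma DERI (h h1 h2 : R -> R -> R) x0 d K a b :
  0 < d -> 0 < a -> 0 < b ->
  (forall x v, Rabs (x - x0) < d -> 1 <= v -> is_derive (fun y => h y v) x (h1 x v)) ->
  (forall x v, Rabs (x - x0) < d -> 1 <= v -> is_derive (fun y => h1 y v) x (h2 x v)) ->
  (forall x v, Rabs (x - x0) < d -> 1 <= v -> continuous (h x) v /\ continuous (h1 x) v) ->
  (forall x v, Rabs (x - x0) < d -> 1 <= v ->
     Rabs (h x v) <= K * DL a b v /\ Rabs (h1 x v) <= K * DL a b v /\ Rabs (h2 x v) <= K * DL a b v) ->
  is_derive (fun x => Ig (h x)) x0 (Ig (h1 x0)).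
Proof.
  intros Hd Ha Hb Hd1 Hd2 Hc Hbd.
  assert (Hx0 : Rabs (x0 - x0) < d) by (rewrite Rminus_diag, Rabs_R0; lra).
  assert (HK: 0 <= K).
  { destruct (Hbd x0 1 Hx0 (Rle_refl 1)) as [H1 _]. pose proof (DL_pos a b 1 Ha Hb Rlt_0_1).
    pose proof (Rabs_pos (h x0 1)). nra. }
  set (c := / a * ln ((a + b) / b)).
  assert (Hc0 : 0 <= c) by (apply lnab_nonneg; auto).
  apply is_derive_Reals. intros eps Heps.
  assert (Hdel : 0 < Rmin (d/2) (eps / (K * c + 1))).
  { apply Rmin_pos. lra. apply Rdiv_lt_0_compat; nra. }
  exists (mkposreal _ Hdel). intros e He0 He. simpl in He.
  assert (Hed : Rabs e < d) by (pose proof (Rmin_l (d/2) (eps / (K * c + 1))); lra).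
  assert (Hee : Rabs e < eps / (K * c + 1)) by (pose proof (Rmin_r (d/2) (eps / (K * c + 1))); lra).
  assert (Hpt : forall v, 1 <= v ->
     Rabs (h (x0 + e) v - h x0 v - e * h1 x0 v) <= (e * e * K) * DL a b v).
  { intros v Hv.
    assert (H1b : forall y, Rabs (y - x0) <= Rabs e -> Rabs (h1 y v - h1 x0 v) <= Rabs (y - x0) * (K * DL a b v)).
    { intros y Hy.
      destruct (MVT_cor4 (fun y => h1 y v) (fun y => h2 y v) x0 (Rabs e)) with (b := y)
        as [cc [Hcc1 Hcc2]]; auto.
      - intros cc Hcc. apply Hd2; lra.
      - rewrite Hcc1, Rabs_mult, Rmult_comm. apply Rmult_le_compat_l. apply Rabs_pos.
        apply (Hbd cc v); lra. }
    destruct (MVT_cor4 (fun y => h y v - y * h1 x0 v) (fun y => h1 y v - h1 x0 v) x0 (Rabs e))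
      with (b := x0 + e) as [cc [Hcc1 Hcc2]].
    - intros cc Hcc.
      apply D_minus. apply Hd1; [lra|auto].
      eapply D_val. apply (D_mult (fun y => y) (fun _ => h1 x0 v)). apply D_id. apply D_const. change (1 * h1 x0 v + cc * 0 = h1 x0 v :> R). ring.
    - replace (x0 + e - x0) with e by ring. lra.
    - replace (h (x0 + e) v - h x0 v - e * h1 x0 v) with
        (h (x0 + e) v - (x0 + e) * h1 x0 v - (h x0 v - x0 * h1 x0 v)) by ring.
      rewrite Hcc1. replace (x0 + e - x0) with e in * by ring.
      rewrite Rabs_mult.
      assert (Hb1 := H1b cc Hcc2).
      pose proof (Rabs_pos (cc - x0)). pose proof (Rabs_pos e).
      pose proof (DL_pos a b v Ha Hb ltac:(lra)).
      assert (Rabs (cc - x0) * (K * DL a b v) <= Rabs e * (K * DL a b v)).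
      { apply Rmult_le_compat_r; [nra|lra]. }
      assert (Rabs e * Rabs e = e * e) by (rewrite <- Rabs_mult; apply Rabs_right; nra).
      eapply Rle_trans. apply Rmult_le_compat_r. apply Rabs_pos. exact Hb1.
      replace (e * e * K * DL a b v) with (Rabs e * (K * DL a b v) * Rabs e) by (rewrite <- H3; ring).
      apply Rmult_le_compat_r. apply Rabs_pos. auto. }
  set (R0 := fun v => h (x0 + e) v - h x0 v - e * h1 x0 v).
  assert (He' : Rabs (x0 + e - x0) < d) by (replace (x0 + e - x0) with e by ring; lra).
  destruct (EXI (h (x0 + e)) a b K Ha Hb) as [I1 _].
  { intros; apply (Hc (x0+e)); auto. }
  { intros; apply (Hbd (x0+e)); auto. }
  destruct (EXI (h x0) a b K Ha Hb) as [I0 _].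
  { intros; apply (Hc x0); auto. }
  { intros; apply (Hbd x0); auto. }
  destruct (EXI (h1 x0) a b K Ha Hb) as [I2 _].
  { intros; apply (Hc x0); auto. }
  { intros; apply (Hbd x0); auto. }
  destruct (EXI R0 a b (e * e * K) Ha Hb) as [IR HR].
  { intros v Hv. unfold R0.
    apply C_minus. apply C_minus.
    apply (Hc (x0+e)); auto. apply (Hc x0); auto.
    apply C_mult. apply C_const. apply (Hc x0); auto. }
  { exact Hpt. }
  assert (IR' : is_RInt_gen R0 (at_point 1) (Rbar_locally p_infty) (Ig (h (x0 + e)) - Ig (h x0) - e * Ig (h1 x0))).
  { apply (G_minus (fun v => h (x0 + e) v - h x0 v) (fun v => e * h1 x0 v)).
    apply G_minus; auto. apply G_scal; auto. }
  pose proof (is_RInt_gen_unique _ _ IR') as HU.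
  rewrite HU in HR. clear - HR He0 Hee HK Hc0 Heps.
  unfold Ig in *.
  set (A := RInt_gen (h (x0 + e)) (at_point 1) (Rbar_locally p_infty)) in *.
  set (B := RInt_gen (h x0) (at_point 1) (Rbar_locally p_infty)) in *.
  set (C := RInt_gen (h1 x0) (at_point 1) (Rbar_locally p_infty)) in *.
  replace ((A - B) / e - C) with ((A - B - e * C) / e) by (field; auto).
  unfold Rdiv. rewrite Rabs_mult, Rabs_Rinv by auto.
  assert (0 < Rabs e) by (apply Rabs_pos_lt; auto).
  apply (Rmult_lt_reg_r (Rabs e)); auto. rewrite Rmult_assoc, Rinv_l, Rmult_1_r by lra.
  eapply Rle_lt_trans. apply HR.
  assert (e * e = Rabs e * Rabs e) by (rewrite <- Rabs_mult; symmetry; apply Rabs_right; nra).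
  rewrite H0.
  assert (Rabs e * (K * c + 1) < eps).
  { apply (Rmult_lt_compat_r (K * c + 1)) in Hee; [|nra].
    unfold Rdiv in Hee. rewrite Rmult_assoc, Rinv_l, Rmult_1_r in Hee by nra. lra. }
  assert (Rabs e * (K * c) < eps) by nra.
  change (/ a * ln ((a + b) / b)) with c.
  replace (Rabs e * Rabs e * K * c) with ((Rabs e * (K * c)) * Rabs e) by ring.
  apply Rmult_lt_compat_r; auto.
Qed.


Definition Good (lam : R -> R) (Tl : R) (Bn : nat -> R) : Prop :=
  (forall x, 50 < x -> 0 < lam x) /\
  (forall n x, 50 < x -> is_derive (Derive_n lam n) x (Derive_n lam (S n) x)) /\
  50 < Tl /\
  (forall n x, Tl <= x -> Rabs (Derive_n lam n x) <= Bn n * lam x / x ^ n) /\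
  (forall a b, Tl <= a -> a <= b -> lam b / b <= lam a / a) /\
  (forall n, 0 <= Bn n).

Definition gg (v : R) := v - sqrt (v ^ 2 - 1).

Lemma gg_bound v : 1 <= v -> 0 <= gg v <= / v.
Proof.
  intros Hv. unfold gg.
  assert (H0 : 0 <= v ^ 2 - 1) by nra.
  pose proof (sqrt_pos (v ^ 2 - 1)) as Hs.
  pose proof (sqrt_sqrt _ H0) as Hss.
  set (w := sqrt (v ^ 2 - 1)) in *.
  assert (Hw : w <= v). { destruct (Rle_or_lt w v); auto. nra. }
  assert (Hp : (v - w) * (v + w) = 1) by nra.
  split. lra.
  assert (0 < v + w) by lra.
  assert (v - w = / (v + w)) by (field_simplify_eq; nra).
  rewrite H1. apply Rinv_le_contravar; lra.
Qed.

Lemma gg_cont v : continuous gg v.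
Proof.
  unfold gg. apply C_minus. apply C_id.
  apply (C_comp sqrt (fun v => v ^ 2 - 1)).
  apply C_minus. apply (C_D _ _ _ (is_derive_pow _ 2 v 1 (D_id v))). apply C_const.
  apply continuous_sqrt.
Qed.

Lemma pow_cont p v : continuous (fun v => v ^ p) v.
Proof. apply (C_D _ _ _ (is_derive_pow _ p v 1 (D_id v))). Qed.

Lemma PB lam Tl Bn n p q a b a0 b0 s0 v :
  Good lam Tl Bn ->
  n = (q + p + 2)%nat -> Tl <= s0 -> s0 <= a + b -> 0 < a0 -> a0 <= a -> 0 < b0 -> b0 <= b -> 1 <= v ->
  Rabs (Derive_n lam n (a + b * v) * v ^ p * gg v)
    <= Bn n * (lam s0 / s0) / (a0 ^ q * b0 ^ p) * DL a0 b0 v.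
Proof.
  intros [G1 [G2 [G3 [G4 [G5 G6]]]]] -> Hs0 Hs0' Ha0 Ha Hb0 Hb Hv.
  set (s := a + b * v).
  assert (Hs1 : a + b <= s) by (unfold s; nra).
  assert (Hs2 : a0 + b0 * v <= s) by (unfold s; nra).
  assert (Hsp : 0 < s) by nra.
  assert (Hlam := G4 (q + p + 2)%nat s ltac:(lra)).
  assert (Hls0 : 0 < lam s0) by (apply G1; lra).
  set (c0 := lam s0 / s0).
  assert (Hc0 : 0 < c0) by (apply Rdiv_lt_0_compat; lra).
  assert (Hls : lam s <= c0 * s).
  { pose proof (G5 s0 s Hs0 ltac:(lra)).
    unfold c0. apply (Rmult_le_compat_r s) in H; [|lra].
    unfold Rdiv in H. rewrite Rmult_assoc, Rinv_l, Rmult_1_r in H by lra. lra. }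
  destruct (gg_bound v Hv) as [Hg0 Hg1].
  assert (Hvp : 0 < v ^ p) by (apply pow_lt; lra).
  rewrite Rabs_mult, Rabs_mult, (Rabs_right (v ^ p)) by lra. rewrite (Rabs_right (gg v)) by lra.
  assert (HBn := G6 (q + p + 2)%nat).
  assert (Hsn : 0 < s ^ (q + p + 2)) by (apply pow_lt; lra).
  assert (Step1 : Rabs (Derive_n lam (q + p + 2) s) * v ^ p * gg v
      <= Bn (q + p + 2)%nat * c0 * (s / s ^ (q + p + 2) * v ^ p * / v)).
  { eapply Rle_trans. apply Rmult_le_compat_r. lra. apply Rmult_le_compat_r. lra. exact Hlam.
    assert (Bn (q + p + 2)%nat * lam s / s ^ (q + p + 2) <= Bn (q + p + 2)%nat * (c0 * s) / s ^ (q + p + 2)).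
    { unfold Rdiv. apply Rmult_le_compat_r. left; apply Rinv_0_lt_compat; lra.
      apply Rmult_le_compat_l; lra. }
    assert (0 <= Bn (q + p + 2)%nat * (c0 * s) / s ^ (q + p + 2)).
    { unfold Rdiv. apply Rmult_le_pos. apply Rmult_le_pos; [lra| apply Rmult_le_pos; lra]. left; apply Rinv_0_lt_compat; lra. }
    apply Rle_trans with (Bn (q + p + 2)%nat * (c0 * s) / s ^ (q + p + 2) * v ^ p * gg v).
    { apply Rmult_le_compat_r; [lra|]. apply Rmult_le_compat_r; lra. }
    replace (Bn (q + p + 2)%nat * c0 * (s / s ^ (q + p + 2) * v ^ p * / v)) with
      (Bn (q + p + 2)%nat * (c0 * s) / s ^ (q + p + 2) * v ^ p * / v) by (field; lra).
    apply Rmult_le_compat_l; [apply Rmult_le_pos; lra|]. auto. }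
  eapply Rle_trans. exact Step1.
  replace (Bn (q + p + 2)%nat * c0 / (a0 ^ q * b0 ^ p) * DL a0 b0 v) with
    (Bn (q + p + 2)%nat * c0 * (/ a0 ^ q * / b0 ^ p * DL a0 b0 v)).
  2:{ field. split; apply pow_nonzero; lra. }
  apply Rmult_le_compat_l. apply Rmult_le_pos; lra.
  assert (Hsq : 0 < s ^ q) by (apply pow_lt; lra).
  assert (Hspp : 0 < s ^ p) by (apply pow_lt; lra).
  replace (s / s ^ (q + p + 2) * v ^ p * / v) with (/ s ^ q * (v / s) ^ p * / (s * v)).
  2:{ unfold Rdiv. rewrite Rpow_mult_distr, pow_add, pow_add. simpl. rewrite pow_inv. field. repeat split; try lra; apply pow_nonzero; lra. }
  apply Rmult_le_compat.
  - apply Rmult_le_pos. left; apply Rinv_0_lt_compat; lra. apply pow_le. apply Rmult_le_pos; [lra|left; apply Rinv_0_lt_compat; lra].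
  - left; apply Rinv_0_lt_compat; nra.
  - apply Rmult_le_compat.
    + left; apply Rinv_0_lt_compat; lra.
    + apply pow_le. apply Rmult_le_pos; [lra|left; apply Rinv_0_lt_compat; lra].
    + apply Rinv_le_contravar. apply pow_lt; lra. apply pow_incr; nra.
    + rewrite <- pow_inv. apply pow_incr. split.
      apply Rmult_le_pos; [lra|left; apply Rinv_0_lt_compat; lra].
      unfold Rdiv. apply (Rmult_le_reg_l b0); auto. rewrite Rinv_r by lra.
      apply (Rmult_le_reg_r s); auto. rewrite Rmult_1_l. rewrite Rmult_assoc, Rmult_assoc, Rinv_l by lra. nra.
  - unfold DL. apply Rinv_le_contravar. nra. nra.
Qed.


Definition Imp (lam : R -> R) (m p : nat) (t r : R) :=
  Ig (fun v => Derive_n lam m (t + r * v) * v ^ p * gg v).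

Lemma Lcont lam Tl Bn m x : Good lam Tl Bn -> 50 < x -> continuous (Derive_n lam m) x.
Proof. intros [_ [G2 _]] Hx. apply (C_D _ _ _ (G2 m x Hx)). Qed.

Lemma DLt lam Tl Bn m c x : Good lam Tl Bn -> 50 < x + c ->
  is_derive (fun y => Derive_n lam m (y + c)) x (Derive_n lam (S m) (x + c)).
Proof.
  intros HG Hx. destruct HG as [_ [G2 _]].
  eapply D_val. apply (D_comp (Derive_n lam m) (fun y => y + c)). apply D_shift. apply G2; auto. rring.
Qed.

Lemma DLr lam Tl Bn m c k x : Good lam Tl Bn -> 50 < c + k * x ->
  is_derive (fun y => Derive_n lam m (c + k * y)) x (k * Derive_n lam (S m) (c + k * x)).
Proof.
  intros HG Hx. destruct HG as [_ [G2 _]].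
  eapply D_val. apply (D_comp (Derive_n lam m) (fun y => c + k * y)). apply D_lin. apply G2; auto. rring.
Qed.

Lemma Icont lam Tl Bn m p t r v : Good lam Tl Bn -> 50 < t + r * v ->
  continuous (fun v => Derive_n lam m (t + r * v) * v ^ p * gg v) v.
Proof.
  intros HG Hx. apply C_mult. apply C_mult.
  apply (C_comp (Derive_n lam m) (fun v => t + r * v)). apply (C_D _ _ _ (D_lin t r v)).
  apply (Lcont _ _ _ _ _ HG Hx).
  apply pow_cont. apply gg_cont.
Qed.

Lemma IB lam Tl Bn m p q t r s0 : Good lam Tl Bn -> m = (q + p + 2)%nat ->
  Tl <= s0 -> s0 <= t + r -> 0 < t -> 0 < r ->
  is_RInt_gen (fun v => Derive_n lam m (t + r * v) * v ^ p * gg v) (at_point 1) (Rbar_locally p_infty) (Imp lam m p t r) /\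
  Rabs (Imp lam m p t r) <= Bn m * (lam s0 / s0) / (t ^ q * r ^ p) * (/ t * ln ((t + r) / r)).
Proof.
  intros HG Hm Hs0 Hs0' Ht Hr.
  assert (G3 : 50 < Tl) by (destruct HG as [_ [_ [G3 _]]]; auto).
  apply EXI; auto.
  - intros v Hv. apply (Icont _ _ _ _ _ _ _ _ HG). nra.
  - intros v Hv. apply (PB lam Tl Bn m p q t r t r s0 v HG Hm); lra.
Qed.

Lemma DT lam Tl Bn m p q t r : Good lam Tl Bn -> m = (q + p + 2)%nat -> Tl < t -> 0 < r ->
  is_derive (fun x => Imp lam m p x r) t (Imp lam (S m) p t r).
Proof.
  intros HG Hm Ht Hr.
  assert (G3 : 50 < Tl) by (destruct HG as [_ [_ [G3 _]]]; auto).
  assert (G1 : forall x, 50 < x -> 0 < lam x) by (destruct HG as [G1 _]; auto).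
  assert (G6 : forall n, 0 <= Bn n) by (destruct HG as [_ [_ [_ [_ [_ G6]]]]]; auto).
  set (d := (t - Tl) / 2).
  set (a := t - d).
  assert (Ha : Tl < a) by (unfold a, d; lra).
  set (c0 := lam a / a).
  assert (Hc0 : 0 < c0) by (apply Rdiv_lt_0_compat; [apply G1|]; lra).
  set (K0 := Bn m * c0 / (a ^ q * r ^ p)).
  set (K1 := Bn (S m) * c0 / (a ^ (S q) * r ^ p)).
  set (K2 := Bn (S (S m)) * c0 / (a ^ (S (S q)) * r ^ p)).
  assert (HKi : forall n q', 0 <= Bn n * c0 / (a ^ q' * r ^ p)).
  { intros. apply Rmult_le_pos. apply Rmult_le_pos; [apply G6|lra].
    left; apply Rinv_0_lt_compat. apply Rmult_lt_0_compat; apply pow_lt; lra. }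
  pose proof (HKi m q). pose proof (HKi (S m) (S q)). pose proof (HKi (S (S m)) (S (S q))).
  unfold Imp.
  apply (DERI (fun x v => Derive_n lam m (x + r * v) * v ^ p * gg v)
              (fun x v => Derive_n lam (S m) (x + r * v) * v ^ p * gg v)
              (fun x v => Derive_n lam (S (S m)) (x + r * v) * v ^ p * gg v)
              t d (K0 + K1 + K2) a r).
  - unfold d; lra.
  - lra.
  - lra.
  - intros x v Hx Hv. apply D_mulc. apply D_mulc.
    apply (DLt lam Tl Bn m (r * v) x HG). apply Rabs_def2 in Hx. unfold d in Hx. nra.
  - intros x v Hx Hv. apply D_mulc. apply D_mulc.
    apply (DLt lam Tl Bn (S m) (r * v) x HG). apply Rabs_def2 in Hx. unfold d in Hx. nra.
  - intros x v Hx Hv. apply Rabs_def2 in Hx. unfold d in Hx.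
    split; apply (Icont _ _ _ _ _ _ _ _ HG); nra.
  - intros x v Hx Hv. apply Rabs_def2 in Hx. unfold d in Hx.
    assert (Hax : a <= x) by (unfold a, d; lra).
    pose proof (DL_pos a r v ltac:(lra) Hr ltac:(lra)).
    repeat split.
    + eapply Rle_trans. apply (PB lam Tl Bn m p q x r a r a v HG Hm); lra.
      fold c0. fold K0. apply Rmult_le_compat_r; [lra| unfold K0, K1, K2; lra].
    + eapply Rle_trans. apply (PB lam Tl Bn (S m) p (S q) x r a r a v HG); try lra. lia.
      fold c0. fold K1. apply Rmult_le_compat_r; [lra| unfold K0, K1, K2; lra].
    + eapply Rle_trans. apply (PB lam Tl Bn (S (S m)) p (S (S q)) x r a r a v HG); try lra. lia.
      fold c0. fold K2. apply Rmult_le_compat_r; [lra| unfold K0, K1, K2; lra].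
Qed.

Lemma DR lam Tl Bn m p q t r : Good lam Tl Bn -> m = (q + p + 2)%nat -> Tl <= t -> 0 < r ->
  is_derive (fun y => Imp lam m p t y) r (Imp lam (S m) (S p) t r).
Proof.
  intros HG Hm Ht Hr.
  assert (G3 : 50 < Tl) by (destruct HG as [_ [_ [G3 _]]]; auto).
  assert (G1 : forall x, 50 < x -> 0 < lam x) by (destruct HG as [G1 _]; auto).
  assert (G6 : forall n, 0 <= Bn n) by (destruct HG as [_ [_ [_ [_ [_ G6]]]]]; auto).
  set (d := r / 2).
  set (c0 := lam t / t).
  assert (Hc0 : 0 < c0) by (apply Rdiv_lt_0_compat; [apply G1|]; lra).
  set (K0 := Bn m * c0 / (t ^ q * d ^ p)).
  set (K1 := Bn (S m) * c0 / (t ^ q * d ^ (S p))).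
  set (K2 := Bn (S (S m)) * c0 / (t ^ q * d ^ (S (S p)))).
  assert (HKi : forall n p', 0 <= Bn n * c0 / (t ^ q * d ^ p')).
  { intros. apply Rmult_le_pos. apply Rmult_le_pos; [apply G6|lra].
    left; apply Rinv_0_lt_compat. apply Rmult_lt_0_compat; apply pow_lt; unfold d; lra. }
  pose proof (HKi m p). pose proof (HKi (S m) (S p)). pose proof (HKi (S (S m)) (S (S p))).
  unfold Imp.
  apply (DERI (fun x v => Derive_n lam m (t + x * v) * v ^ p * gg v)
              (fun x v => Derive_n lam (S m) (t + x * v) * v ^ (S p) * gg v)
              (fun x v => Derive_n lam (S (S m)) (t + x * v) * v ^ (S (S p)) * gg v)
              r d (K0 + K1 + K2) t d).
  - unfold d; lra.
  - lra.
  - unfold d; lra.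
  - intros x v Hx Hv. apply Rabs_def2 in Hx. unfold d in Hx.
    eapply D_val. apply D_mulc. apply D_mulc.
    apply (D_ext (fun y => Derive_n lam m (t + v * y))). intros; rewrite (Rmult_comm v); auto.
    apply (DLr lam Tl Bn m t v x HG). nra.
    simpl. rewrite (Rmult_comm v x). rring.
  - intros x v Hx Hv. apply Rabs_def2 in Hx. unfold d in Hx.
    eapply D_val. apply D_mulc. apply D_mulc.
    apply (D_ext (fun y => Derive_n lam (S m) (t + v * y))). intros; rewrite (Rmult_comm v); auto.
    apply (DLr lam Tl Bn (S m) t v x HG). nra.
    simpl. rewrite (Rmult_comm v x). rring.
  - intros x v Hx Hv. apply Rabs_def2 in Hx. unfold d in Hx.
    split; apply (Icont _ _ _ _ _ _ _ _ HG); nra.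
  - intros x v Hx Hv. apply Rabs_def2 in Hx. unfold d in Hx.
    pose proof (DL_pos t (r/2) v ltac:(lra) ltac:(lra) ltac:(lra)).
    repeat split.
    + eapply Rle_trans. apply (PB lam Tl Bn m p q t x t d t v HG Hm); unfold d; lra.
      fold c0. fold K0. apply Rmult_le_compat_r; [unfold d; lra| unfold K0, K1, K2; lra].
    + eapply Rle_trans. apply (PB lam Tl Bn (S m) (S p) q t x t d t v HG); try (unfold d; lra). lia.
      fold c0. fold K1. apply Rmult_le_compat_r; [unfold d; lra| unfold K0, K1, K2; lra].
    + eapply Rle_trans. apply (PB lam Tl Bn (S (S m)) (S (S p)) q t x t d t v HG); try (unfold d; lra). lia.
      fold c0. fold K2. apply Rmult_le_compat_r; [unfold d; lra| unfold K0, K1, K2; lra].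
Qed.


Definition uu (lam : R -> R) k t r := Derive_n lam k (t + r) - Derive_n lam k t - r * Derive_n lam (S k) (t + r).

Definition AA (lam : R -> R) (k j : nat) (t r : R) :=
  match j with
  | 0 => -2 * uu lam k t r / r
  | 1 => 2 * Derive_n lam (k + 2) (t + r) + 2 * uu lam k t r / r ^ 2
  | 2 => 2 * Derive_n lam (k + 3) (t + r) - 2 * Derive_n lam (k + 2) (t + r) / r - 4 * uu lam k t r / r ^ 3
  | _ => 2 * Derive_n lam (k + 4) (t + r) - 2 * Derive_n lam (k + 3) (t + r) / r
         + 6 * Derive_n lam (k + 2) (t + r) / r ^ 2 + 12 * uu lam k t r / r ^ 4
  end.

Definition BB (lam : R -> R) (k j : nat) (t r : R) :=
  match j with
  | 0 => 2 * r * Imp lam (k + 2) 0 t r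
  | 1 => 2 * r * Imp lam (k + 3) 1 t r + 2 * Imp lam (k + 2) 0 t r
  | 2 => 2 * r * Imp lam (k + 4) 2 t r + 4 * Imp lam (k + 3) 1 t r
  | _ => 2 * r * Imp lam (k + 5) 3 t r + 6 * Imp lam (k + 4) 2 t r
  end.

Definition EE lam k j t r := AA lam k j t r + BB lam k j t r.

Lemma RD_L lam n y : Derive (fun x => Derive_n lam n x) y = Derive_n lam (S n) y.
Proof. reflexivity. Qed.

Lemma RD_L2 lam n y : Derive (fun x => Derive (Derive_n lam n) x) y = Derive_n lam (S (S n)) y.
Proof. reflexivity. Qed.
Lemma EX_L2 lam Tl Bn n y : Good lam Tl Bn -> 50 < y -> ex_derive (fun x => Derive (Derive_n lam n) x) y.
Proof. intros [_ [G2 _]] Hy. eexists. apply (G2 (S n)); auto. Qed.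

Lemma RD_T lam Tl Bn t r : Good lam Tl Bn -> Tl < t -> 0 < r -> forall m p, (p + 2 <= m)%nat ->
  Derive (fun x => Imp lam m p x r) t = Imp lam (S m) p t r.
Proof.
  intros HG Ht Hr m p Hm. apply is_derive_unique.
  apply (DT lam Tl Bn m p (m - p - 2) t r HG); auto. lia.
Qed.

Lemma RD_R lam Tl Bn t r : Good lam Tl Bn -> Tl <= t -> 0 < r -> forall m p, (p + 2 <= m)%nat ->
  Derive (fun y => Imp lam m p t y) r = Imp lam (S m) (S p) t r.
Proof.
  intros HG Ht Hr m p Hm. apply is_derive_unique.
  apply (DR lam Tl Bn m p (m - p - 2) t r HG); auto. lia.
Qed.

Lemma EX_L lam Tl Bn n y : Good lam Tl Bn -> 50 < y -> ex_derive (fun x => Derive_n lam n x) y.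
Proof. intros [_ [G2 _]] Hy. eexists. apply G2; auto. Qed.

Lemma EX_T lam Tl Bn t r m p : Good lam Tl Bn -> Tl < t -> 0 < r -> (p + 2 <= m)%nat ->
  ex_derive (fun x => Imp lam m p x r) t.
Proof. intros. eexists. apply (DT lam Tl Bn m p (m - p - 2) t r); auto. lia. Qed.

Lemma EX_R lam Tl Bn t r m p : Good lam Tl Bn -> Tl <= t -> 0 < r -> (p + 2 <= m)%nat ->
  ex_derive (fun y => Imp lam m p t y) r.
Proof. intros. eexists. apply (DR lam Tl Bn m p (m - p - 2) t r); auto. lia. Qed.

Lemma EX_L0 lam Tl Bn n y : Good lam Tl Bn -> 50 < y -> ex_derive (fun x => Derive_n lam n x) y.
Proof. intros [_ [G2 _]] Hy. eexists. apply G2; auto. Qed.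

Ltac exd lam Tl Bn HG r :=
  repeat match goal with
    | |- _ /\ _ => split
    | |- True => exact I
    | |- ex_derive (fun x => Derive_n lam _ x) _ => apply (EX_L lam Tl Bn); [exact HG|lra]
    | |- ex_derive (fun x => Derive (Derive_n lam _) x) _ => apply (EX_L2 lam Tl Bn); [exact HG|lra]
    | |- ex_derive (fun x => Imp lam _ _ x r) _ => apply (EX_T lam Tl Bn); [exact HG|lra|lra|lia]
    | |- ex_derive (fun y => Imp lam _ _ _ y) _ => apply (EX_R lam Tl Bn); [exact HG|lra|lra|lia]
    | |- _ <> 0 => lra
  end.

Lemma ET lam Tl Bn k j t r : Good lam Tl Bn -> Tl < t -> 0 < r ->
  is_derive (fun x => EE lam k j x r) t (EE lam (S k) j t r).
Proof.
  intros HG Ht Hr.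
  assert (G3 : 50 < Tl) by (destruct HG as [_ [_ [G3 _]]]; auto).
  destruct j as [|[|[|j]]]; unfold EE, AA, BB, uu; cbn [Nat.add];
  auto_derive; exd lam Tl Bn HG r;
  rewrite ?RD_L, ?RD_L2; rewrite !(RD_T lam Tl Bn t r HG Ht Hr) by lia; field; lra.
Qed.

Lemma ER lam Tl Bn k j t r : Good lam Tl Bn -> Tl <= t -> 0 < r -> (j < 3)%nat ->
  is_derive (fun y => EE lam k j t y) r (EE lam k (S j) t r).
Proof.
  intros HG Ht Hr Hj.
  assert (G3 : 50 < Tl) by (destruct HG as [_ [_ [G3 _]]]; auto).
  destruct j as [|[|[|j]]]; try lia; unfold EE, AA, BB, uu; cbn [Nat.add];
  auto_derive; exd lam Tl Bn HG r.
  all: rewrite ?RD_L, ?RD_L2.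
  all: rewrite ?(RD_R lam Tl Bn t r HG Ht Hr (k+2) 0), ?(RD_R lam Tl Bn t r HG Ht Hr (k+3) 1),
     ?(RD_R lam Tl Bn t r HG Ht Hr (k+4) 2), ?(RD_R lam Tl Bn t r HG Ht Hr (k+5) 3) by lia.
  all: replace (S (k + 2)) with (k + 3)%nat by lia.
  all: try replace (S (k + 3)) with (k + 4)%nat by lia.
  all: try replace (S (k + 4)) with (k + 5)%nat by lia.
  all: try replace (k + 2)%nat with (S (S k)) by lia.
  all: try (field; lra).
  all: repeat apply Rmult_integral_contrapositive_currified; lra.
Qed.


Lemma DN (f : R -> R) (Phi : nat -> R -> R) a N :
  (forall x, a < x -> f x = Phi 0%nat x) ->
  (forall n x, (n < N)%nat -> a < x -> is_derive (Phi n) x (Phi (S n) x)) ->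
  forall k x, (k <= N)%nat -> a < x -> Derive_n f k x = Phi k x.
Proof.
  intros H0 HS k. induction k as [|k IH]; intros x Hk Hx.
  - simpl. auto.
  - simpl. rewrite (Derive_ext_loc _ (Phi k)).
    + apply is_derive_unique. apply HS; [lia|lra].
    + assert (He : 0 < x - a) by lra.
      exists (mkposreal _ He). intros y Hy. apply IH. lia.
      apply ball_R in Hy. simpl in Hy. apply Rabs_def2 in Hy. unfold minus, plus, opp in Hy; simpl in Hy. lra.
Qed.

Lemma CV (f phi : R -> R) t r l : 0 < r ->
  (forall v, phi v = r * f (t + r * v)) ->
  is_RInt_gen phi (at_point 1) (Rbar_locally p_infty) l ->
  is_RInt_gen f (at_point (t + r)) (Rbar_locally p_infty) l.
Proof.
  intros Hr Hphi H P HP.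
  destruct (H P HP) as [Q Rr HQ HR Hqr].
  destruct HR as [M HM].
  apply Filter_prod with (Q := fun x => x = t + r) (R := fun c => t + r * M < c).
  - reflexivity.
  - exists (t + r * M). auto.
  - intros x c -> Hc.
    assert (HM' : M < (c - t) / r).
    { apply (Rmult_lt_reg_r r); auto. unfold Rdiv. rewrite Rmult_assoc, Rinv_l by lra. lra. }
    destruct (Hqr 1 ((c - t) / r) HQ (HM _ HM')) as [y [Hy Py]].
    exists y. split; auto. simpl in *.
    assert (Hy' : is_RInt phi (/ r * (t + r) + - t / r) (/ r * c + - t / r) y).
    { replace (/ r * (t + r) + - t / r) with 1 by (field; lra).
      replace (/ r * c + - t / r) with ((c - t) / r) by (field; lra). exact Hy. }
    pose proof (is_RInt_comp_lin phi (/ r) (- t / r) (t + r) c y Hy') as Hc'.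
    refine (is_RInt_ext _ _ _ _ _ _ Hc').
    intros z _. rewrite Hphi.
    replace (t + r * (/ r * z + - t / r)) with z by (field; lra).
    change (/ r * (r * f z) = f z). field. lra.
Qed.

Lemma sqrt_scale r x : 0 < r -> sqrt ((r * x) ^ 2 - r ^ 2) = r * sqrt (x ^ 2 - 1).
Proof.
  intros Hr.
  replace ((r * x) ^ 2 - r ^ 2) with ((r * r) * (x ^ 2 - 1)) by ring.
  destruct (Rle_or_lt 0 (x ^ 2 - 1)) as [Hp|Hn].
  - rewrite sqrt_mult; try nra. rewrite sqrt_square; lra.
  - rewrite !sqrt_neg_0; try lra. nra.
Qed.

Lemma REP lam Tl Bn t r : Good lam Tl Bn -> Tl <= t -> 0 < r -> w1 lam t r = EE lam 0 0 t r.
Proof.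
  intros HG Ht Hr.
  assert (G3 : 50 < Tl) by (destruct HG as [_ [_ [G3 _]]]; auto).
  destruct (IB lam Tl Bn 2 0 0 t r t HG eq_refl) as [HI _]; try lra.
  apply (G_scal _ (r ^ 2)) in HI.
  apply (CV (fun s => Derive_n lam 2 s * ((s - t) - sqrt ((s - t) ^ 2 - r ^ 2))) _ t r) in HI; auto.
  2:{ intros v. replace (t + r * v - t) with (r * v) by ring. rewrite sqrt_scale by auto.
      unfold gg. simpl. ring. }
  unfold w1. rewrite (is_RInt_gen_unique _ _ HI).
  unfold EE, AA, BB, uu. simpl. replace (Derive (fun x => lam x) (t + r)) with (Derive lam (t + r)) by reflexivity. field. lra.
Qed.

Lemma inner lam Tl Bn t r j : Good lam Tl Bn -> Tl <= t -> 0 < r -> (j <= 3)%nat ->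
  Derive_n (fun r' => w1 lam t r') j r = EE lam 0 j t r.
Proof.
  intros HG Ht Hr Hj.
  apply (DN (fun r' => w1 lam t r') (fun n r' => EE lam 0 n t r') 0 3); auto.
  - intros x Hx. apply (REP lam Tl Bn); auto.
  - intros n x Hn Hx. apply (ER lam Tl Bn); auto.
Qed.

Lemma outer lam Tl Bn t r k j : Good lam Tl Bn -> Tl < t -> 0 < r -> (j <= 3)%nat ->
  dw1 lam k j t r = EE lam k j t r.
Proof.
  intros HG Ht Hr Hj. unfold dw1.
  apply (DN (fun t' => Derive_n (fun r' => w1 lam t' r') j r) (fun n t' => EE lam n j t' r) Tl k); auto.
  - intros x Hx. apply (inner lam Tl Bn); auto; lra.
  - intros n x Hn Hx. apply (ET lam Tl Bn); auto.
Qed.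


Lemma abs2 x y : Rabs x <= y -> -y <= x <= y.
Proof. unfold Rabs; destruct (Rcase_abs x); lra. Qed.
Lemma abs2r x y : -y <= x <= y -> Rabs x <= y.
Proof. unfold Rabs; destruct (Rcase_abs x); lra. Qed.
Lemma abs_mulr a b s : 0 < s -> Rabs a <= b -> Rabs (a * s) <= b * s.
Proof. intros. rewrite Rabs_mult, (Rabs_right s) by lra. apply Rmult_le_compat_r; lra. Qed.
Lemma abs_divr a b s : 0 < s -> Rabs a <= b -> Rabs (a / s) <= b / s.
Proof. intros. unfold Rdiv. apply abs_mulr; auto. apply Rinv_0_lt_compat; auto. Qed.

(* regime 1: r <= t *)
Lemma J1 (j : nat) (a2 a3 a4 u b0 b1 b2 b3 X Lg r E : R) :
  0 < r -> 0 <= X -> 1 <= Lg ->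
  Rabs a2 <= 2 * X -> Rabs a3 <= 2 * X / r -> Rabs a4 <= 2 * X / r ^ 2 ->
  Rabs u <= 2 * X * r ^ 2 ->
  Rabs b0 <= 2 * X * Lg -> Rabs b1 <= 2 * X * Lg / r -> Rabs b2 <= 2 * X * Lg / r ^ 2 ->
  Rabs b3 <= 2 * X * Lg / r ^ 3 ->
  E = match j with
      | 0 => -2 * u / r + 2 * r * b0
      | 1 => 2 * a2 + 2 * u / r ^ 2 + (2 * r * b1 + 2 * b0)
      | 2 => 2 * a3 - 2 * a2 / r - 4 * u / r ^ 3 + (2 * r * b2 + 4 * b1)
      | _ => 2 * a4 - 2 * a3 / r + 6 * a2 / r ^ 2 + 12 * u / r ^ 4 + (2 * r * b3 + 6 * b2)
      end ->
  Rabs E <= 60 * X * Lg * match j with 0 => r | 1 => 1 | 2 => / r | _ => / r ^ 2 end.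
Proof.
  intros Hr HX HL h2 h3 h4 hu hb0 hb1 hb2 hb3 HE.
  assert (HXL : X <= X * Lg) by nra.
  assert (Hir : 0 < / r) by (apply Rinv_0_lt_compat; lra).
  assert (Hr2 : 0 < r ^ 2) by (apply pow_lt; lra).
  destruct j as [|[|[|j]]]; subst E; apply abs2r.
  - apply (abs_divr u _ r) in hu; auto. replace (2 * X * r ^ 2 / r) with (2 * X * r) in hu by (field; lra).
    apply (abs_mulr b0 _ r) in hb0; auto.
    apply abs2 in hu. apply abs2 in hb0.
    replace (-2 * u / r + 2 * r * b0) with (-2 * (u / r) + 2 * (b0 * r)) by (field; lra).
    assert (X * r <= X * Lg * r) by nra. nra.
  - apply (abs_divr u _ (r ^ 2)) in hu; auto. replace (2 * X * r ^ 2 / r ^ 2) with (2 * X) in hu by (field; lra).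
    apply (abs_mulr b1 _ r) in hb1; auto. replace (2 * X * Lg / r * r) with (2 * X * Lg) in hb1 by (field; lra).
    apply abs2 in hu. apply abs2 in hb0. apply abs2 in hb1. apply abs2 in h2.
    replace (2 * a2 + 2 * u / r ^ 2 + (2 * r * b1 + 2 * b0)) with (2 * a2 + 2 * (u / r ^ 2) + (2 * (b1 * r) + 2 * b0)) by (field; lra).
    nra.
  - set (Z := X / r). assert (HZ : Z <= X * Lg * / r) by (unfold Z; unfold Rdiv; apply Rmult_le_compat_r; lra).
    apply (abs_divr u _ (r ^ 3)) in hu; [|apply pow_lt; lra]. replace (2 * X * r ^ 2 / r ^ 3) with (2 * Z) in hu by (unfold Z; field; lra).
    apply (abs_divr a2 _ r) in h2; auto. replace (2 * X / r) with (2 * Z) in h2 by (unfold Z; field; lra).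
    replace (2 * X / r) with (2 * Z) in h3 by (unfold Z; field; lra).
    apply (abs_mulr b2 _ r) in hb2; auto. replace (2 * X * Lg / r ^ 2 * r) with (2 * (X * Lg * / r)) in hb2 by (field; lra).
    replace (2 * X * Lg / r) with (2 * (X * Lg * / r)) in hb1 by (field; lra).
    apply abs2 in hu. apply abs2 in hb2. apply abs2 in hb1. apply abs2 in h2. apply abs2 in h3.
    replace (2 * a3 - 2 * a2 / r - 4 * u / r ^ 3 + (2 * r * b2 + 4 * b1)) with
      (2 * a3 - 2 * (a2 / r) - 4 * (u / r ^ 3) + (2 * (b2 * r) + 4 * b1)) by (field; lra).
    lra.
  - set (Z := X / r ^ 2). assert (HZ : Z <= X * Lg * / r ^ 2) by (unfold Z; unfold Rdiv; apply Rmult_le_compat_r; [left; apply Rinv_0_lt_compat|]; lra).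
    apply (abs_divr u _ (r ^ 4)) in hu; [|apply pow_lt; lra]. replace (2 * X * r ^ 2 / r ^ 4) with (2 * Z) in hu by (unfold Z; field; lra).
    apply (abs_divr a2 _ (r ^ 2)) in h2; auto. replace (2 * X / r ^ 2) with (2 * Z) in h2 by (unfold Z; field; lra).
    apply (abs_divr a3 _ r) in h3; auto. replace (2 * X / r / r) with (2 * Z) in h3 by (unfold Z; field; lra).
    replace (2 * X / r ^ 2) with (2 * Z) in h4 by (unfold Z; field; lra).
    apply (abs_mulr b3 _ r) in hb3; auto. replace (2 * X * Lg / r ^ 3 * r) with (2 * (X * Lg * / r ^ 2)) in hb3 by (field; lra).
    replace (2 * X * Lg / r ^ 2) with (2 * (X * Lg * / r ^ 2)) in hb2 by (field; lra).
    apply abs2 in hu. apply abs2 in hb2. apply abs2 in hb3. apply abs2 in h2. apply abs2 in h3. apply abs2 in h4.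
    replace (2 * a4 - 2 * a3 / r + 6 * a2 / r ^ 2 + 12 * u / r ^ 4 + (2 * r * b3 + 6 * b2)) with
      (2 * a4 - 2 * (a3 / r) + 6 * (a2 / r ^ 2) + 12 * (u / r ^ 4) + (2 * (b3 * r) + 6 * b2)) by (field; lra).
    lra.
Qed.

(* regime 2: t <= r *)
Lemma J2 (j : nat) (a2 a3 a4 u b0 b1 b2 b3 Y r E : R) :
  0 < r -> 0 <= Y ->
  Rabs a2 <= Y / r ^ 2 -> Rabs a3 <= Y / r ^ 3 -> Rabs a4 <= Y / r ^ 4 ->
  Rabs u <= 3 * Y ->
  Rabs b0 <= Y / r ^ 2 -> Rabs b1 <= Y / r ^ 3 -> Rabs b2 <= Y / r ^ 4 -> Rabs b3 <= Y / r ^ 5 ->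
  E = match j with
      | 0 => -2 * u / r + 2 * r * b0
      | 1 => 2 * a2 + 2 * u / r ^ 2 + (2 * r * b1 + 2 * b0)
      | 2 => 2 * a3 - 2 * a2 / r - 4 * u / r ^ 3 + (2 * r * b2 + 4 * b1)
      | _ => 2 * a4 - 2 * a3 / r + 6 * a2 / r ^ 2 + 12 * u / r ^ 4 + (2 * r * b3 + 6 * b2)
      end ->
  Rabs E <= 60 * Y / r ^ (1 + match j with 0 => 0 | 1 => 1 | 2 => 2 | _ => 3 end).
Proof.
  intros Hr HY h2 h3 h4 hu hb0 hb1 hb2 hb3 HE.
  destruct j as [|[|[|j]]]; subst E; apply abs2r; cbn [Nat.add].
  - set (Z := Y / r). apply (abs_divr u _ r) in hu; auto. replace (3 * Y / r) with (3 * Z) in hu by (unfold Z; field; lra).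
    apply (abs_mulr b0 _ r) in hb0; auto. replace (Y / r ^ 2 * r) with Z in hb0 by (unfold Z; field; lra).
    apply abs2 in hu. apply abs2 in hb0.
    replace (-2 * u / r + 2 * r * b0) with (-2 * (u / r) + 2 * (b0 * r)) by (field; lra).
    replace (60 * Y / r ^ 1) with (60 * Z) by (unfold Z; field; lra). lra.
  - set (Z := Y / r ^ 2). apply (abs_divr u _ (r ^ 2)) in hu; [|apply pow_lt; lra]. replace (3 * Y / r ^ 2) with (3 * Z) in hu by (unfold Z; field; lra).
    apply (abs_mulr b1 _ r) in hb1; auto. replace (Y / r ^ 3 * r) with Z in hb1 by (unfold Z; field; lra).
    try replace (Y / r ^ 2) with Z in hb0, h2 by (unfold Z; field; lra).
    apply abs2 in hu. apply abs2 in hb0. apply abs2 in hb1. apply abs2 in h2.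
    replace (2 * a2 + 2 * u / r ^ 2 + (2 * r * b1 + 2 * b0)) with (2 * a2 + 2 * (u / r ^ 2) + (2 * (b1 * r) + 2 * b0)) by (field; lra).
    replace (60 * Y / r ^ 2) with (60 * Z) by (unfold Z; field; lra). lra.
  - set (Z := Y / r ^ 3). apply (abs_divr u _ (r ^ 3)) in hu; [|apply pow_lt; lra]. replace (3 * Y / r ^ 3) with (3 * Z) in hu by (unfold Z; field; lra).
    apply (abs_divr a2 _ r) in h2; auto. replace (Y / r ^ 2 / r) with Z in h2 by (unfold Z; field; lra).
    apply (abs_mulr b2 _ r) in hb2; auto. replace (Y / r ^ 4 * r) with Z in hb2 by (unfold Z; field; lra).
    try replace (Y / r ^ 3) with Z in hb1, h3 by (unfold Z; field; lra).
    apply abs2 in hu. apply abs2 in hb2. apply abs2 in hb1. apply abs2 in h2. apply abs2 in h3.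
    replace (2 * a3 - 2 * a2 / r - 4 * u / r ^ 3 + (2 * r * b2 + 4 * b1)) with
      (2 * a3 - 2 * (a2 / r) - 4 * (u / r ^ 3) + (2 * (b2 * r) + 4 * b1)) by (field; lra).
    replace (60 * Y / r ^ 3) with (60 * Z) by (unfold Z; field; lra). lra.
  - set (Z := Y / r ^ 4). apply (abs_divr u _ (r ^ 4)) in hu; [|apply pow_lt; lra]. replace (3 * Y / r ^ 4) with (3 * Z) in hu by (unfold Z; field; lra).
    apply (abs_divr a2 _ (r ^ 2)) in h2; [|apply pow_lt; lra]. replace (Y / r ^ 2 / r ^ 2) with Z in h2 by (unfold Z; field; lra).
    apply (abs_divr a3 _ r) in h3; auto. replace (Y / r ^ 3 / r) with Z in h3 by (unfold Z; field; lra).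
    apply (abs_mulr b3 _ r) in hb3; auto. replace (Y / r ^ 5 * r) with Z in hb3 by (unfold Z; field; lra).
    try replace (Y / r ^ 4) with Z in hb2, h4 by (unfold Z; field; lra).
    apply abs2 in hu. apply abs2 in hb2. apply abs2 in hb3. apply abs2 in h2. apply abs2 in h3. apply abs2 in h4.
    replace (2 * a4 - 2 * a3 / r + 6 * a2 / r ^ 2 + 12 * u / r ^ 4 + (2 * r * b3 + 6 * b2)) with
      (2 * a4 - 2 * (a3 / r) + 6 * (a2 / r ^ 2) + 12 * (u / r ^ 4) + (2 * (b3 * r) + 6 * b2)) by (field; lra).
    replace (60 * Y / r ^ 4) with (60 * Z) by (unfold Z; field; lra). lra.
Qed.


Lemma lam_pos lam Tl Bn x : Good lam Tl Bn -> Tl <= x -> 0 < lam x.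
Proof. intros [G1 [_ [G3 _]]] H. apply G1. lra. Qed.

Lemma lam_grow lam Tl Bn t y : Good lam Tl Bn -> Tl <= t -> t <= y -> lam y <= lam t * y / t.
Proof.
  intros HG Ht Hy. destruct HG as [G1 [G2 [G3 [G4 [G5 G6]]]]].
  pose proof (G5 t y Ht Hy).
  apply (Rmult_le_compat_r y) in H; [|lra].
  unfold Rdiv in *. rewrite Rmult_assoc, Rinv_l, Rmult_1_r in H by lra.
  replace (lam t * y * / t) with (lam t * / t * y) by ring. lra.
Qed.

Lemma LB1 lam Tl Bn Bm n t y : Good lam Tl Bn -> (forall n, (n <= 13)%nat -> Bn n = Bm) -> (n <= 13)%nat ->
  Tl <= t -> t <= y <= 2 * t -> Rabs (Derive_n lam n y) <= 2 * Bm * lam t / t ^ n.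
Proof.
  intros HG HB Hn Ht Hy.
  assert (HG' := HG). destruct HG' as [G1 [G2 [G3 [G4 [G5 G6]]]]].
  pose proof (G4 n y ltac:(lra)) as H. rewrite HB in H by auto.
  pose proof (lam_grow _ _ _ t y HG Ht ltac:(lra)).
  pose proof (lam_pos _ _ _ y HG ltac:(lra)). pose proof (lam_pos _ _ _ t HG Ht).
  assert (HBm : 0 <= Bm) by (rewrite <- (HB n Hn); auto).
  assert (lam y <= 2 * lam t).
  { eapply Rle_trans. exact H0. apply (Rmult_le_reg_r t). lra. unfold Rdiv. rewrite Rmult_assoc, Rinv_l by lra. nra. }
  eapply Rle_trans. exact H.
  assert (0 < t ^ n) by (apply pow_lt; lra).
  assert (t ^ n <= y ^ n) by (apply pow_incr; lra).
  unfold Rdiv. apply Rmult_le_compat.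
  - apply Rmult_le_pos; lra.
  - left; apply Rinv_0_lt_compat, pow_lt; lra.
  - nra.
  - apply Rinv_le_contravar; lra.
Qed.

Lemma Uphi lam Tl Bn k t y : Good lam Tl Bn -> 50 < y ->
  is_derive (fun z => Derive_n lam k z - Derive_n lam k t - (z - t) * Derive_n lam (S k) z) y
    (- (y - t) * Derive_n lam (S (S k)) y).
Proof.
  intros HG Hy. assert (HG' := HG). destruct HG' as [G1 [G2 _]].
  eapply D_val. apply D_minus. apply D_minus. apply G2; auto. apply D_const.
  apply D_mult. apply D_minus. apply D_id. apply D_const.
  apply G2; auto. cbv beta. rring.
Qed.

Lemma UB1 lam Tl Bn Bm k t r : Good lam Tl Bn -> (forall n, (n <= 13)%nat -> Bn n = Bm) -> (k <= 11)%nat ->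
  Tl <= t -> 0 < r -> r <= t -> Rabs (uu lam k t r) <= 2 * (Bm * lam t / t ^ (k + 2)) * r ^ 2.
Proof.
  intros HG HB Hk Ht Hr Hrt.
  assert (G3 : 50 < Tl) by (destruct HG as [_ [_ [G3 _]]]; auto).
  destruct (MVT_cor2 (fun z => Derive_n lam k z - Derive_n lam k t - (z - t) * Derive_n lam (S k) z)
     (fun y => - (y - t) * Derive_n lam (S (S k)) y) t (t + r)) as [c [Hc1 Hc2]].
  - lra.
  - intros c Hc. apply is_derive_Reals. apply (Uphi lam Tl Bn); auto. lra.
  - unfold uu. replace (Derive_n lam k (t + r) - Derive_n lam k t - r * Derive_n lam (S k) (t + r))
      with ((Derive_n lam k (t + r) - Derive_n lam k t - (t + r - t) * Derive_n lam (S k) (t + r)) -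
            (Derive_n lam k t - Derive_n lam k t - (t - t) * Derive_n lam (S k) t)) by ring.
    rewrite Hc1. replace (t + r - t) with r by ring.
    pose proof (LB1 lam Tl Bn Bm (S (S k)) t c HG HB ltac:(lia) Ht ltac:(lra)).
    replace (S (S k)) with (k + 2)%nat in H by lia.
    rewrite Rabs_mult, Rabs_mult, Rabs_Ropp, (Rabs_right (c - t)) by lra. rewrite (Rabs_right r) by lra.
    assert (0 <= Bm * lam t / t ^ (k + 2)).
    { pose proof (lam_pos _ _ _ t HG Ht). destruct HG as [_ [_ [_ [_ [_ G6]]]]].
      rewrite <- (HB 0%nat) by lia. unfold Rdiv. apply Rmult_le_pos. apply Rmult_le_pos; [apply G6|lra].
      left; apply Rinv_0_lt_compat, pow_lt; lra. }
    replace (S (S k)) with (k + 2)%nat by lia.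
    replace (2 * Bm * lam t / t ^ (k + 2)) with (2 * (Bm * lam t / t ^ (k + 2))) in H by (unfold Rdiv; ring).
    assert (c - t <= r) by lra.
    pose proof (Rabs_pos (Derive_n lam (k + 2) c)).
    simpl. set (A := Rabs (Derive_n lam (k + 2) c)) in *. set (X := Bm * lam t / t ^ (k + 2)) in *.
    assert ((c - t) * A <= r * (2 * X)) by (apply Rmult_le_compat; lra).
    replace (2 * X * (r * (r * 1))) with (r * (2 * X) * r) by ring.
    apply Rmult_le_compat_r; lra.
Qed.

Lemma sup_ge lam Tl Bn t r y : Good lam Tl Bn -> Tl <= t -> 0 < r -> t <= y <= t + r ->
  lam y <= sup_on lam t (t + r).
Proof.
  intros HG Ht Hr Hy. unfold sup_on.
  assert (G3 : 50 < Tl) by (destruct HG as [_ [_ [G3 _]]]; auto).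
  set (E := fun z => exists x, t <= x <= t + r /\ z = lam x).
  destruct (Lub_Rbar_correct E) as [Hub Hlub].
  assert (HE : E (lam y)) by (exists y; split; auto).
  assert (Hb : is_ub_Rbar E (Finite (lam t * (t + r) / t))).
  { intros z [x [Hx ->]]. simpl. pose proof (lam_grow lam Tl Bn t x HG Ht ltac:(lra)).
    pose proof (lam_pos _ _ _ t HG Ht).
    eapply Rle_trans. exact H. unfold Rdiv. apply Rmult_le_compat_r. left; apply Rinv_0_lt_compat; lra.
    apply Rmult_le_compat_l; lra. }
  pose proof (Hlub _ Hb) as H1. pose proof (Hub _ HE) as H2.
  destruct (Lub_Rbar E) as [l| |]; simpl in *; try contradiction. lra.
Qed.


Lemma IB1 lam Tl Bn Bm k p t r : Good lam Tl Bn -> (forall n, (n <= 13)%nat -> Bn n = Bm) ->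
  (k + p + 2 <= 13)%nat -> Tl <= t -> 1 <= ln t -> 0 < r -> r <= t ->
  Rabs (Imp lam (k + p + 2) p t r) <= 2 * (Bm * lam t / t ^ (k + 2)) * (ln t + Rabs (ln r)) / r ^ p.
Proof.
  intros HG HB Hk Ht Hl Hr Hrt.
  assert (G3 : 50 < Tl) by (destruct HG as [_ [_ [G3 _]]]; auto).
  destruct (IB lam Tl Bn (k + p + 2) p k t r t HG eq_refl) as [_ H]; try lra.
  rewrite HB in H by lia.
  assert (HL : ln ((t + r) / r) <= 2 * (ln t + Rabs (ln r))).
  { assert (Hir : 0 < / r) by (apply Rinv_0_lt_compat; lra).
    unfold Rdiv. rewrite (ln_mult (t + r) (/ r)) by lra. rewrite (ln_Rinv r) by lra.
    assert (H0 : ln (t + r) <= ln (2 * t)) by (apply ln_le; lra).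
    rewrite (ln_mult 2 t) in H0 by lra.
    assert (H1 : ln 2 <= ln t) by (apply ln_le; lra).
    pose proof (Rabs_pos (ln r)) as H2. pose proof (Rle_abs (- ln r)) as H3. rewrite Rabs_Ropp in H3.
    lra. }
  assert (Hlt := lam_pos _ _ _ t HG Ht).
  assert (HBm : 0 <= Bm) by (rewrite <- (HB 0%nat) by lia; destruct HG as [_ [_ [_ [_ [_ G6]]]]]; auto).
  assert (0 < t ^ k) by (apply pow_lt; lra).
  assert (0 < r ^ p) by (apply pow_lt; lra).
  eapply Rle_trans. exact H.
  replace (Bm * (lam t / t) / (t ^ k * r ^ p) * (/ t * ln ((t + r) / r)))
    with ((Bm * lam t / t ^ (k + 2)) / r ^ p * ln ((t + r) / r)).
  2:{ rewrite pow_add. simpl. field. repeat split; try apply pow_nonzero; lra. }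
  replace (2 * (Bm * lam t / t ^ (k + 2)) * (ln t + Rabs (ln r)) / r ^ p)
    with ((Bm * lam t / t ^ (k + 2)) / r ^ p * (2 * (ln t + Rabs (ln r)))) by (field; repeat split; try apply pow_nonzero; lra).
  apply Rmult_le_compat_l; auto.
  apply Rmult_le_pos. apply Rmult_le_pos. apply Rmult_le_pos; lra.
  left; apply Rinv_0_lt_compat, pow_lt; lra. left; apply Rinv_0_lt_compat; lra.
Qed.

Lemma Reg1 lam Tl Bn Bm k j t r : Good lam Tl Bn -> (forall n, (n <= 13)%nat -> Bn n = Bm) ->
  (k <= 8)%nat -> Tl <= t -> 1 <= ln t -> 0 < r -> r <= t ->
  Rabs (EE lam k j t r) <= 60 * (Bm * lam t / t ^ (k + 2)) * (ln t + Rabs (ln r)) *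
     match j with 0 => r | 1 => 1 | 2 => / r | _ => / r ^ 2 end.
Proof.
  intros HG HB Hk Ht Hl Hr Hrt.
  assert (G3 : 50 < Tl) by (destruct HG as [_ [_ [G3 _]]]; auto).
  assert (Hlt := lam_pos _ _ _ t HG Ht).
  assert (HBm : 0 <= Bm) by (rewrite <- (HB 0%nat) by lia; destruct HG as [_ [_ [_ [_ [_ G6]]]]]; auto).
  set (X := Bm * lam t / t ^ (k + 2)).
  assert (HX : 0 <= X).
  { unfold X, Rdiv. apply Rmult_le_pos. apply Rmult_le_pos; lra. left; apply Rinv_0_lt_compat, pow_lt; lra. }
  assert (Hy : t <= t + r <= 2 * t) by lra.
  apply (J1 j (Derive_n lam (k + 2) (t + r)) (Derive_n lam (k + 3) (t + r)) (Derive_n lam (k + 4) (t + r))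
            (uu lam k t r) (Imp lam (k + 2) 0 t r) (Imp lam (k + 3) 1 t r) (Imp lam (k + 4) 2 t r)
            (Imp lam (k + 5) 3 t r) X (ln t + Rabs (ln r)) r); auto.
  - pose proof (Rabs_pos (ln r)). lra.
  - pose proof (LB1 lam Tl Bn Bm (k + 2) t (t + r) HG HB ltac:(lia) Ht Hy). unfold X. lra.
  - pose proof (LB1 lam Tl Bn Bm (k + 3) t (t + r) HG HB ltac:(lia) Ht Hy).
    eapply Rle_trans. exact H.
    replace (2 * Bm * lam t / t ^ (k + 3)) with (2 * X / t) by (unfold X; replace (k + 3)%nat with (S (k + 2)) by lia; simpl; field; split; [apply pow_nonzero|]; lra).
    unfold Rdiv. apply Rmult_le_compat_l; [lra|]. apply Rinv_le_contravar; lra.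
  - pose proof (LB1 lam Tl Bn Bm (k + 4) t (t + r) HG HB ltac:(lia) Ht Hy).
    eapply Rle_trans. exact H.
    replace (2 * Bm * lam t / t ^ (k + 4)) with (2 * X / t ^ 2) by (unfold X; replace (k + 4)%nat with (S (S (k + 2))) by lia; simpl; field; split; [apply pow_nonzero|]; lra).
    unfold Rdiv. apply Rmult_le_compat_l; [lra|]. apply Rinv_le_contravar. apply pow_lt; lra. apply pow_incr; lra.
  - apply (UB1 lam Tl Bn Bm k t r HG HB); [lia|lra|lra|lra].
  - pose proof (IB1 lam Tl Bn Bm k 0 t r HG HB ltac:(lia) Ht Hl Hr Hrt).
    replace (k + 0 + 2)%nat with (k + 2)%nat in H by lia. simpl in H. fold X in H. lra.
  - pose proof (IB1 lam Tl Bn Bm k 1 t r HG HB ltac:(lia) Ht Hl Hr Hrt).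
    replace (k + 1 + 2)%nat with (k + 3)%nat in H by lia. fold X in H. simpl in H. rewrite Rmult_1_r in H. exact H.
  - pose proof (IB1 lam Tl Bn Bm k 2 t r HG HB ltac:(lia) Ht Hl Hr Hrt).
    replace (k + 2 + 2)%nat with (k + 4)%nat in H by lia. fold X in H. exact H.
  - pose proof (IB1 lam Tl Bn Bm k 3 t r HG HB ltac:(lia) Ht Hl Hr Hrt).
    replace (k + 3 + 2)%nat with (k + 5)%nat in H by lia. fold X in H. exact H.
  - unfold EE, AA, BB. destruct j as [|[|[|j]]]; reflexivity.
Qed.


Lemma Bm_nonneg lam Tl Bn Bm : Good lam Tl Bn -> (forall n, (n <= 13)%nat -> Bn n = Bm) -> 0 <= Bm.
Proof. intros HG HB. rewrite <- (HB 0%nat) by lia. destruct HG as [_ [_ [_ [_ [_ G6]]]]]; auto. Qed.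

Lemma LB2 lam Tl Bn Bm k i t r : Good lam Tl Bn -> (forall n, (n <= 13)%nat -> Bn n = Bm) ->
  (k + i <= 13)%nat -> Tl <= t -> 0 < r -> t <= r ->
  Rabs (Derive_n lam (k + i) (t + r)) <= Bm * sup_on lam t (t + r) / t ^ k / r ^ i.
Proof.
  intros HG HB Hk Ht Hr Htr.
  assert (G3 : 50 < Tl) by (destruct HG as [_ [_ [G3 _]]]; auto).
  assert (HBm := Bm_nonneg _ _ _ _ HG HB).
  assert (HG' := HG). destruct HG' as [G1 [G2 [_ [G4 [G5 G6]]]]].
  pose proof (G4 (k + i)%nat (t + r) ltac:(lra)) as H. rewrite HB in H by auto.
  pose proof (sup_ge lam Tl Bn t r (t + r) HG Ht Hr ltac:(lra)) as HS.
  pose proof (lam_pos _ _ _ (t + r) HG ltac:(lra)).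
  eapply Rle_trans. exact H.
  rewrite pow_add.
  assert (0 < t ^ k) by (apply pow_lt; lra). assert (0 < r ^ i) by (apply pow_lt; lra).
  assert (t ^ k <= (t + r) ^ k) by (apply pow_incr; lra).
  assert (r ^ i <= (t + r) ^ i) by (apply pow_incr; lra).
  replace (Bm * sup_on lam t (t + r) / t ^ k / r ^ i) with (Bm * sup_on lam t (t + r) / (t ^ k * r ^ i)) by (field; split; lra).
  unfold Rdiv. apply Rmult_le_compat. apply Rmult_le_pos; lra. left; apply Rinv_0_lt_compat; nra.
  apply Rmult_le_compat_l; lra.
  apply Rinv_le_contravar. nra. apply Rmult_le_compat; lra.
Qed.

Lemma LB2t lam Tl Bn Bm k t r : Good lam Tl Bn -> (forall n, (n <= 13)%nat -> Bn n = Bm) ->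
  (k <= 13)%nat -> Tl <= t -> 0 < r ->
  Rabs (Derive_n lam k t) <= Bm * sup_on lam t (t + r) / t ^ k.
Proof.
  intros HG HB Hk Ht Hr.
  assert (G3 : 50 < Tl) by (destruct HG as [_ [_ [G3 _]]]; auto).
  assert (HBm := Bm_nonneg _ _ _ _ HG HB).
  assert (HG' := HG). destruct HG' as [G1 [G2 [_ [G4 [G5 G6]]]]].
  pose proof (G4 k t Ht) as H. rewrite HB in H by auto.
  pose proof (sup_ge lam Tl Bn t r t HG Ht Hr ltac:(lra)) as HS.
  eapply Rle_trans. exact H.
  unfold Rdiv. apply Rmult_le_compat_r. left; apply Rinv_0_lt_compat, pow_lt; lra.
  apply Rmult_le_compat_l; lra.
Qed.

Lemma IB2 lam Tl Bn Bm k p t r : Good lam Tl Bn -> (forall n, (n <= 13)%nat -> Bn n = Bm) ->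
  (k + p + 2 <= 13)%nat -> Tl <= t -> 0 < r -> t <= r ->
  Rabs (Imp lam (k + p + 2) p t r) <= Bm * sup_on lam t (t + r) / t ^ k / r ^ (p + 2).
Proof.
  intros HG HB Hk Ht Hr Htr.
  assert (G3 : 50 < Tl) by (destruct HG as [_ [_ [G3 _]]]; auto).
  assert (HBm := Bm_nonneg _ _ _ _ HG HB).
  destruct (IB lam Tl Bn (k + p + 2) p k t r (t + r) HG eq_refl) as [_ H]; try lra.
  rewrite HB in H by lia.
  pose proof (sup_ge lam Tl Bn t r (t + r) HG Ht Hr ltac:(lra)) as HS.
  pose proof (lam_pos _ _ _ (t + r) HG ltac:(lra)).
  assert (HL : / t * ln ((t + r) / r) <= / r).
  { replace ((t + r) / r) with (1 + t / r) by (field; lra).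
    pose proof (ln_1p_le (t / r) ltac:(apply Rlt_le, Rdiv_lt_0_compat; lra)).
    assert (0 <= ln (1 + t / r)). { rewrite <- ln_1. apply ln_le; try lra. assert (0 < t / r) by (apply Rdiv_lt_0_compat; lra). lra. }
    apply Rle_trans with (/ t * (t / r)). apply Rmult_le_compat_l; auto. left; apply Rinv_0_lt_compat; lra.
    right. field. lra. }
  assert (HL2 : lam (t + r) / (t + r) <= sup_on lam t (t + r) / r).
  { unfold Rdiv. apply Rmult_le_compat; try lra. left; apply Rinv_0_lt_compat; lra.
    apply Rinv_le_contravar; lra. }
  assert (0 < t ^ k) by (apply pow_lt; lra). assert (0 < r ^ p) by (apply pow_lt; lra).
  assert (0 <= ln ((t + r) / r)).
  { rewrite <- ln_1. apply ln_le; try lra. apply (Rmult_le_reg_r r); auto. unfold Rdiv. rewrite Rmult_assoc, Rinv_l; lra. }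
  eapply Rle_trans. exact H.
  apply Rle_trans with (Bm * (sup_on lam t (t + r) / r) / (t ^ k * r ^ p) * / r).
  - apply Rmult_le_compat.
    + unfold Rdiv. apply Rmult_le_pos. apply Rmult_le_pos; auto. apply Rmult_le_pos; [lra|left; apply Rinv_0_lt_compat; lra].
      left; apply Rinv_0_lt_compat; nra.
    + apply Rmult_le_pos; auto. left; apply Rinv_0_lt_compat; lra.
    + unfold Rdiv. apply Rmult_le_compat_r. left; apply Rinv_0_lt_compat; nra. apply Rmult_le_compat_l; auto.
    + auto.
  - right. rewrite pow_add. simpl. field. repeat split; lra.
Qed.

Lemma UB2 lam Tl Bn Bm k t r : Good lam Tl Bn -> (forall n, (n <= 13)%nat -> Bn n = Bm) ->
  (k <= 12)%nat -> Tl <= t -> 0 < r -> t <= r ->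
  Rabs (uu lam k t r) <= 3 * (Bm * sup_on lam t (t + r) / t ^ k).
Proof.
  intros HG HB Hk Ht Hr Htr.
  pose proof (LB2 lam Tl Bn Bm k 0 t r HG HB ltac:(lia) Ht Hr Htr) as H0.
  pose proof (LB2 lam Tl Bn Bm k 1 t r HG HB ltac:(lia) Ht Hr Htr) as H1.
  pose proof (LB2t lam Tl Bn Bm k t r HG HB ltac:(lia) Ht Hr) as H2.
  replace (k + 0)%nat with k in H0 by lia. replace (k + 1)%nat with (S k) in H1 by lia.
  rewrite pow_O, Rdiv_1_r in H0. rewrite pow_1 in H1.
  unfold uu.
  set (Y := Bm * sup_on lam t (t + r) / t ^ k) in *.
  apply (abs_mulr _ _ r) in H1; auto. replace (Y / r * r) with Y in H1 by (field; lra).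
  rewrite Rmult_comm in H1.
  apply abs2 in H0. apply abs2 in H1. apply abs2 in H2. apply abs2r. lra.
Qed.

Lemma Reg2 lam Tl Bn Bm k j t r : Good lam Tl Bn -> (forall n, (n <= 13)%nat -> Bn n = Bm) ->
  (k <= 8)%nat -> Tl <= t -> 0 < r -> t <= r ->
  Rabs (EE lam k j t r) <= 60 * (Bm * sup_on lam t (t + r) / t ^ k) /
     r ^ (1 + match j with 0 => 0 | 1 => 1 | 2 => 2 | _ => 3 end).
Proof.
  intros HG HB Hk Ht Hr Htr.
  assert (G3 : 50 < Tl) by (destruct HG as [_ [_ [G3 _]]]; auto).
  assert (HBm := Bm_nonneg _ _ _ _ HG HB).
  pose proof (sup_ge lam Tl Bn t r t HG Ht Hr ltac:(lra)) as HS.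
  pose proof (lam_pos _ _ _ t HG Ht).
  set (Y := Bm * sup_on lam t (t + r) / t ^ k).
  assert (HY : 0 <= Y).
  { unfold Y, Rdiv. apply Rmult_le_pos. apply Rmult_le_pos; lra. left; apply Rinv_0_lt_compat, pow_lt; lra. }
  apply (J2 j (Derive_n lam (k + 2) (t + r)) (Derive_n lam (k + 3) (t + r)) (Derive_n lam (k + 4) (t + r))
            (uu lam k t r) (Imp lam (k + 2) 0 t r) (Imp lam (k + 3) 1 t r) (Imp lam (k + 4) 2 t r)
            (Imp lam (k + 5) 3 t r) Y r); auto.
  - apply (LB2 lam Tl Bn Bm k 2 t r); auto; lia.
  - apply (LB2 lam Tl Bn Bm k 3 t r); auto; lia.
  - apply (LB2 lam Tl Bn Bm k 4 t r); auto; lia.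
  - apply (UB2 lam Tl Bn Bm k t r); auto; lia.
  - pose proof (IB2 lam Tl Bn Bm k 0 t r HG HB ltac:(lia) Ht Hr Htr) as HH.
    replace (k + 0 + 2)%nat with (k + 2)%nat in HH by lia. exact HH.
  - pose proof (IB2 lam Tl Bn Bm k 1 t r HG HB ltac:(lia) Ht Hr Htr) as HH.
    replace (k + 1 + 2)%nat with (k + 3)%nat in HH by lia. exact HH.
  - pose proof (IB2 lam Tl Bn Bm k 2 t r HG HB ltac:(lia) Ht Hr Htr) as HH.
    replace (k + 2 + 2)%nat with (k + 4)%nat in HH by lia. exact HH.
  - pose proof (IB2 lam Tl Bn Bm k 3 t r HG HB ltac:(lia) Ht Hr Htr) as HH.
    replace (k + 3 + 2)%nat with (k + 5)%nat in HH by lia. exact HH.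
  - unfold EE, AA, BB. destruct j as [|[|[|j]]]; reflexivity.
Qed.


Lemma sum_ge (f : nat -> R) N n : (forall i, 0 <= f i) -> (n <= N)%nat -> f n <= sum_f_R0 f N.
Proof.
  intros Hf. induction N as [|N IH]; intros Hn.
  - replace n with 0%nat by lia. simpl. lra.
  - simpl. destruct (Nat.eq_dec n (S N)) as [->|Hne].
    + assert (0 <= sum_f_R0 f N). { clear IH Hn. induction N; simpl; auto. pose proof (Hf (S N)). lra. }
      lra.
    + pose proof (IH ltac:(lia)). pose proof (Hf (S N)). lra.
Qed.

Lemma mono_lam (lam : R -> R) Tl Cu :
  (forall x, 50 < x -> 0 < lam x) ->
  (forall n x, 50 < x -> is_derive (Derive_n lam n) x (Derive_n lam (S n) x)) ->
  50 < Tl -> Cu <= 1 ->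
  (forall t, Tl <= t -> Derive lam t / lam t <= Cu / t) ->
  forall a b, Tl <= a -> a <= b -> lam b / b <= lam a / a.
Proof.
  intros G1 G2 HTl HCu Hd a b Ha Hab.
  destruct (Req_dec a b) as [->|Hne]; [lra|].
  destruct (MVT_cor2 (fun s => lam s / s) (fun s => (Derive lam s * s - lam s) / s ^ 2) a b) as [c [Hc1 Hc2]].
  - lra.
  - intros c Hc. apply is_derive_Reals.
    apply (D_val _ _ _ _ (is_derive_div lam (fun s => s) c (Derive lam c) 1 (G2 0%nat c ltac:(lra)) (D_id c) ltac:(lra))).
    simpl. field. lra.
  - assert (Hc : (Derive lam c * c - lam c) / c ^ 2 <= 0).
    { pose proof (Hd c ltac:(lra)). pose proof (G1 c ltac:(lra)).
      assert (Derive lam c <= Cu * lam c / c).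
      { apply (Rmult_le_compat_r (lam c)) in H; [|lra]. unfold Rdiv in *.
        rewrite Rmult_assoc, Rinv_l, Rmult_1_r in H by lra. lra. }
      assert (Derive lam c * c <= lam c).
      { apply (Rmult_le_compat_r c) in H1; [|lra]. unfold Rdiv in H1.
        rewrite Rmult_assoc, Rmult_assoc, Rinv_l, Rmult_1_r in H1 by lra. nra. }
      unfold Rdiv. apply Rmult_le_0_r. lra. left; apply Rinv_0_lt_compat, pow_lt; lra. }
    assert (lam b / b - lam a / a <= 0) by (rewrite Hc1; nra). lra.
Qed.

Theorem lemma4p2 :
  forall (nK nKh nC Crho : R), 0 <= nK -> 0 <= nKh -> 0 <= nC -> 0 < Crho ->
  forall (lam : R -> R) (Tl : R), in_Lambda nK nKh nC Crho lam Tl ->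
  forall T2 : R, exp 900 * (1 + Tl) <= T2 ->
  (forall t, T2 <= t -> Rpower t (2/3) * lam t < t / 100) ->
  exists C : R, 0 < C /\
    forall T0 : R, T2 <= T0 ->
    forall (k j : nat) (t r : R), (k <= 8)%nat -> (j <= 3)%nat ->
      T0 <= t -> 0 < r ->
      (r <= t ->
         Rabs (dw1 lam k j t r)
         <= C * Rpower r (1 - INR j) * lam t * (ln t + Rabs (ln r)) / t ^ (2 + k)) /\
      (t <= r ->
         Rabs (dw1 lam k j t r)
         <= C / (r ^ (1 + j) * t ^ k) * sup_on lam t (t + r)).
Proof.
  intros nK nKh nC Crho HnK HnKh HnC HCrho lam Tl HL T2 HT2 Hpow.
  destruct HL as [G1 [Gsm [HTl [Cl [Cu [C2 [Ck [HCl [HCu [HC2 [HCk [Hd1 [Hd2 [Hdk HM]]]]]]]]]]]]]].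
  cbv zeta in HM. destruct HM as [HM1 _].
  set (Bf := fun n : nat => 1 + Rabs Cl + Rabs Cu + Rabs C2 + Rabs (Ck n)).
  assert (HBf : forall n, 1 <= Bf n).
  { intros n. unfold Bf. pose proof (Rabs_pos Cl). pose proof (Rabs_pos Cu). pose proof (Rabs_pos C2). pose proof (Rabs_pos (Ck n)). lra. }
  set (Bm := sum_f_R0 Bf 13).
  set (Bn := fun n : nat => if (n <=? 13)%nat then Bm else Bf n).
  assert (HBfm : forall n, (n <= 13)%nat -> Bf n <= Bm).
  { intros n Hn. apply sum_ge; auto. intros i; pose proof (HBf i); lra. }
  assert (HB : forall n, (n <= 13)%nat -> Bn n = Bm).
  { intros n Hn. unfold Bn. apply Nat.leb_le in Hn. rewrite Hn. auto. }
  assert (HBfn : forall n, Bf n <= Bn n).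
  { intros n. unfold Bn. destruct (n <=? 13)%nat eqn:E. apply HBfm. apply Nat.leb_le; auto. lra. }
  assert (G2 : forall n x, 50 < x -> is_derive (Derive_n lam n) x (Derive_n lam (S n) x)).
  { intros n x Hx. apply Derive_correct. apply (Gsm (S n) x Hx). }
  assert (G5 := mono_lam lam Tl Cu G1 G2 ltac:(lra) ltac:(lra) (fun t Ht => proj2 (Hd1 t Ht))).
  assert (G4 : forall n x, Tl <= x -> Rabs (Derive_n lam n x) <= Bn n * lam x / x ^ n).
  { intros n x Hx.
    assert (Hlx : 0 < lam x) by (apply G1; lra).
    assert (Hxn : 0 < x ^ n) by (apply pow_lt; lra).
    apply Rle_trans with (Bf n * lam x / x ^ n).
    2:{ unfold Rdiv. apply Rmult_le_compat_r. left; apply Rinv_0_lt_compat; lra.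
        apply Rmult_le_compat_r; [lra|]. apply HBfn. }
    assert (Hgen : forall c, Rabs (Derive_n lam n x) / lam x <= c / x ^ n -> 0 <= c -> c <= Bf n ->
                    Rabs (Derive_n lam n x) <= Bf n * lam x / x ^ n).
    { intros c Hc Hc0 HcB.
      apply (Rmult_le_compat_r (lam x)) in Hc; [|lra]. unfold Rdiv in Hc.
      rewrite Rmult_assoc, Rinv_l, Rmult_1_r in Hc by lra.
      eapply Rle_trans. exact Hc. unfold Rdiv.
      replace (c * / x ^ n * lam x) with (c * (lam x * / x ^ n)) by ring.
      replace (Bf n * lam x * / x ^ n) with (Bf n * (lam x * / x ^ n)) by ring.
      apply Rmult_le_compat_r; auto. apply Rmult_le_pos; [lra|left; apply Rinv_0_lt_compat; lra]. }
    destruct n as [|[|[|n]]].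
    - simpl. rewrite Rabs_right by lra. pose proof (HBf 0%nat). replace (Bf 0%nat * lam x / 1) with (Bf 0%nat * lam x) by field. nra.
    - apply (Hgen (Rabs Cl + Rabs Cu)).
      + destruct (Hd1 x Hx) as [Ha Hb]. rewrite pow_1.
        change (Derive_n lam 1 x) with (Derive lam x).
        replace (Rabs (Derive lam x) / lam x) with (Rabs (Derive lam x / lam x))
          by (unfold Rdiv; rewrite Rabs_mult, Rabs_inv, (Rabs_right (lam x)); lra).
        apply abs2r. pose proof (Rle_abs Cl). pose proof (Rle_abs Cu). unfold Rdiv in Ha, Hb |- *.
        assert (0 < / x) by (apply Rinv_0_lt_compat; lra).
        split; nra.
      + pose proof (Rabs_pos Cl). pose proof (Rabs_pos Cu). lra.
      + unfold Bf. pose proof (Rabs_pos C2). pose proof (Rabs_pos (Ck 1%nat)). lra.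
    - apply (Hgen (Rabs C2)).
      + eapply Rle_trans. apply Hd2; auto. unfold Rdiv. apply Rmult_le_compat_r. left; apply Rinv_0_lt_compat; lra. apply Rle_abs.
      + apply Rabs_pos.
      + unfold Bf. pose proof (Rabs_pos Cl). pose proof (Rabs_pos Cu). pose proof (Rabs_pos (Ck 2%nat)). lra.
    - apply (Hgen (Rabs (Ck (S (S (S n)))))).
      + eapply Rle_trans. apply Hdk; auto. lia. unfold Rdiv. apply Rmult_le_compat_r. left; apply Rinv_0_lt_compat; lra. apply Rle_abs.
      + apply Rabs_pos.
      + unfold Bf. pose proof (Rabs_pos Cl). pose proof (Rabs_pos Cu). pose proof (Rabs_pos C2). lra. }
  assert (G6 : forall n, 0 <= Bn n) by (intros n; pose proof (HBfn n); pose proof (HBf n); lra).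
  assert (HG : Good lam Tl Bn).
  { unfold Good. split; [exact G1|split; [exact G2|split; [lra|split; [exact G4|split; [exact G5|exact G6]]]]]. }
  assert (HBm1 : 1 <= Bm) by (pose proof (HBfm 0%nat ltac:(lia)); pose proof (HBf 0%nat); lra).
  exists (60 * Bm). split. lra.
  intros T0 HT0 k j t r Hk Hj Ht Hr.
  assert (He : 1 <= exp 900) by (rewrite <- exp_0; left; apply exp_increasing; lra).
  assert (He1 : exp 1 <= exp 900) by (left; apply exp_increasing; lra).
  assert (HtT : exp 900 * 1 <= t) by (apply Rle_trans with (exp 900 * (1 + Tl)); [apply Rmult_le_compat_l; lra|lra]).
  assert (HtTl : Tl < t) by nra.
  assert (Hlt : 1 <= ln t).
  { rewrite <- (ln_exp 1). apply ln_le. apply exp_pos. lra. }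
  rewrite (outer lam Tl Bn t r k j HG HtTl Hr Hj).
  split.
  - intros Hrt.
    eapply Rle_trans. apply (Reg1 lam Tl Bn Bm k j t r HG HB Hk ltac:(lra) Hlt Hr Hrt).
    right. rewrite (Nat.add_comm 2 k).
    destruct j as [|[|[|[|j]]]]; try lia.
    + replace (1 - INR 0) with 1 by (simpl; lra). rewrite Rpower_1 by lra. field. repeat split; try apply pow_nonzero; lra.
    + replace (1 - INR 1) with 0 by (simpl; lra). rewrite Rpower_O by lra. field. repeat split; try apply pow_nonzero; lra.
    + replace (1 - INR 2) with (- INR 1) by (simpl; lra). rewrite Rpower_Ropp, Rpower_pow by lra. simpl.
      field. repeat split; try apply pow_nonzero; lra.
    + replace (1 - INR 3) with (- INR 2) by (simpl; lra). rewrite Rpower_Ropp, Rpower_pow by lra.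
      field. repeat split; try apply pow_nonzero; lra.
  - intros Htr.
    eapply Rle_trans. apply (Reg2 lam Tl Bn Bm k j t r HG HB Hk ltac:(lra) Hr Htr).
    right. destruct j as [|[|[|[|j]]]]; try lia; field; repeat split; try apply pow_nonzero; lra.
Qed.
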